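(* With the notation of the context, for all fixed frequencies, $$|S_k|\lesssim\min\big((N_2\wedge N_3)^{2-\alpha}\log(2+N_1)+N_1,\ (N_1\wedge N_2)^{2-\alpha}\log(2+N_3)+N_3\big),$$ $$|S_{k_1}|\lesssim\min\big(N_3^{2-\alpha}\log(2+N_2)+N_2,\ N_2^{2-\alpha}\log(2+N_3)+N_3\big),$$ $$|S_{k_2}|\lesssim\min\big(N_3^{2-\alpha}\log(2+N_1)+N_1,\ N_1^{2-\alpha}\log(2+N_3)+N_3\big),$$ $$|S_{k_3}|\lesssim\min\big(N_1^{2-\alpha}\log(2+N_2)+N_2,\ N_2^{2-\alpha}\log(2+N_1)+N_1\big).$$
   Context: Fix $\alpha\in(1,2)$, dyadic numbers $1\le N_1,N_2,N_3\le N$, a real number $m$ and a constant $C_0>0$. Let $S$ be the set of $(k,k_1,k_2,k_3)\in\mathbb Z^4$ with $k=k_1-k_2+k_3$, $k_2\notin\{k_1,k_3\}$, $\big||k_1|^\alpha-|k_2|^\alpha+|k_3|^\alpha-|k|^\alpha-m\big|\le C_0$, $|k|\le N$ and $|k_j|\le N_j$ for $j=1,2,3$. When some of the variables are fixed, $S$ with those variables as subscripts denotes the set of the remaining variables for which the quadruple lies in $S$ (e.g. $S_{k_1}=\{(k,k_2,k_3):(k,k_1,k_2,k_3)\in S\}$). $|A|$ is the cardinality of $A$, $a\wedge b=\min(a,b)$. $A\lesssim B$ means $A\le CB$ with $C$ depending only on $\alpha$ and $C_0$. *)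

(* Defs.v *)
From Stdlib Require Import Reals ZArith List Lia Lra.
Import ListNotations.
Open Scope R_scope.

(* x^a for x >= 0, with the convention 0^a = 0 (a > 0). *)
Definition rpow (x a : R) : R :=
  if Req_EM_T x 0 then 0 else Rpower x a.

Definition absp (k : Z) (alpha : R) : R := rpow (IZR (Z.abs k)) alpha.

Definition dyad (n : nat) : Z := (2 ^ Z.of_nat n)%Z.

Definition inS (alpha C0 m : R) (N N1 N2 N3 : Z) (k k1 k2 k3 : Z) : bool :=
  Z.eqb k (k1 - k2 + k3)%Z && negb (Z.eqb k2 k1) && negb (Z.eqb k2 k3) &&
  (if Rle_dec (Rabs (absp k1 alpha - absp k2 alpha + absp k3 alpha
                     - absp k alpha - m)) C0 then true else false) &&
  Z.leb (Z.abs k) N && Z.leb (Z.abs k1) N1 && Z.leb (Z.abs k2) N2 &&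
  Z.leb (Z.abs k3) N3.

Definition zrange (a : Z) : list Z :=
  map (fun i => (Z.of_nat i - a)%Z) (seq 0 (Z.to_nat (2 * a + 1))).

Definition box3 (a b c : Z) : list (Z * Z * Z) :=
  list_prod (list_prod (zrange a) (zrange b)) (zrange c).

(* Cardinalities of the fibres; every element of S satisfies |k|<=N, |k_j|<=N_j,
   so enumerating the box and filtering counts each fibre element exactly once. *)
Definition card_Sk alpha C0 m N N1 N2 N3 k : nat :=
  length (filter (fun '(k1, k2, k3) => inS alpha C0 m N N1 N2 N3 k k1 k2 k3)
                 (box3 N1 N2 N3)).
Definition card_Sk1 alpha C0 m N N1 N2 N3 k1 : nat :=
  length (filter (fun '(k, k2, k3) => inS alpha C0 m N N1 N2 N3 k k1 k2 k3)
                 (box3 N N2 N3)).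
Definition card_Sk2 alpha C0 m N N1 N2 N3 k2 : nat :=
  length (filter (fun '(k, k1, k3) => inS alpha C0 m N N1 N2 N3 k k1 k2 k3)
                 (box3 N N1 N3)).
Definition card_Sk3 alpha C0 m N N1 N2 N3 k3 : nat :=
  length (filter (fun '(k, k1, k2) => inS alpha C0 m N N1 N2 N3 k k1 k2 k3)
                 (box3 N N1 N2)).

Definition bnd (alpha : R) (A B : Z) : R :=
  Rpower (IZR A) (2 - alpha) * ln (2 + IZR B) + IZR B.

(* Main.v *)
Require Import Defs.
From Stdlib Require Import Reals ZArith Lra Lia List.
Import ListNotations.
Open Scope R_scope.

Lemma exp_le (x y : R) : x <= y -> exp x <= exp y.
Proof. intros [H|H]; [left; apply exp_increasing; auto|subst; lra]. Qed.

Lemma Rpower_antimono_base (a b e : R) : 0 < a <= b -> e <= 0 -> Rpower b e <= Rpower a e.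
Proof.
  intros [Ha Hab] He. unfold Rpower. apply exp_le.
  destruct (Req_dec a b) as [->|Hne]; [lra|].
  assert (ln a < ln b) by (apply ln_increasing; lra).
  nra.
Qed.

Lemma Rpower_pos (x e : R) : 0 < Rpower x e.
Proof. unfold Rpower. apply exp_pos. Qed.

Lemma Rpower_ge1 (z e : R) : 1 <= z -> 0 <= e -> 1 <= Rpower z e.
Proof.
  intros Hz He. rewrite <- (Rpower_O z) by lra. apply Rle_Rpower; lra.
Qed.

Lemma Rpower_le_self (z e : R) : 1 <= z -> e <= 1 -> Rpower z e <= z.
Proof.
  intros Hz He. rewrite <- (Rpower_1 z) at 2 by lra. apply Rle_Rpower; lra.
Qed.

Lemma Rpower_ge_inv (z e : R) : 1 <= z -> -1 <= e -> / z <= Rpower z e.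
Proof.
  intros Hz He. replace (/ z) with (Rpower z (- (1))).
  - apply Rle_Rpower; lra.
  - rewrite Rpower_Ropp, Rpower_1; lra.
Qed.

Lemma Rpower_inv_mul (z e : R) : Rpower z e * Rpower z (- e) = 1.
Proof. rewrite <- Rpower_plus. replace (e + - e) with 0 by ring. unfold Rpower. rewrite Rmult_0_l. apply exp_0. Qed.

Lemma Rpower_one_base (e : R) : Rpower 1 e = 1.
Proof. unfold Rpower. rewrite ln_1, Rmult_0_r. apply exp_0. Qed.

Lemma ln_le_pow (x g : R) : 1 <= x -> 0 < g -> g * ln x <= Rpower x g.
Proof.
  intros Hx Hg. unfold Rpower. pose proof (exp_ineq1_le (g * ln x)). lra.
Qed.

Lemma sd_real (a t : R) : 1 < a < 2 -> 0 < t ->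
  a * (a - 1) * Rpower (t + 2) (a - 2) <=
  Rpower (t + 2) a - 2 * Rpower (t + 1) a + Rpower t a.
Proof.
  intros Ha Ht.
  set (f := fun s => Rpower (s + 1) a - Rpower s a).
  set (f' := fun s => a * Rpower (s + 1) (a - 1) - a * Rpower s (a - 1)).
  assert (Hd : forall c, t <= c <= t + 1 -> derivable_pt_lim f c (f' c)).
  { intros c Hc. unfold f, f'. apply derivable_pt_lim_minus.
    - replace (a * Rpower (c + 1) (a - 1)) with ((a * Rpower (c + 1) (a - 1)) * 1) by ring.
      apply (derivable_pt_lim_comp (fun s => s + 1) (fun x => Rpower x a)).
      + intros eps Heps. exists (mkposreal eps Heps). intros hh Hh _.
        replace ((c + hh + 1 - (c + 1)) / hh - 1) with 0 by (field; auto).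
        rewrite Rabs_R0. auto.
      + apply derivable_pt_lim_power. lra.
    - apply derivable_pt_lim_power. lra. }
  destruct (MVT_cor2 f f' t (t + 1) ltac:(lra) Hd) as [xi [Hxi Hxir]].
  set (h := fun s => Rpower s (a - 1)).
  assert (Hd2 : forall c, xi <= c <= xi + 1 ->
     derivable_pt_lim h c ((a - 1) * Rpower c (a - 1 - 1))).
  { intros c Hc. unfold h. apply derivable_pt_lim_power. lra. }
  destruct (MVT_cor2 h _ xi (xi + 1) ltac:(lra) Hd2) as [ze [Hze Hzer]].
  unfold f, f', h in *.
  replace (t + 1 + 1) with (t + 2) in Hxi by ring.
  replace (a - 1 - 1) with (a - 2) in Hze by ring.
  assert (Hmon : Rpower (t + 2) (a - 2) <= Rpower ze (a - 2)).
  { apply Rpower_antimono_base; lra. }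
  assert (E1 : Rpower (t + 2) a - 2 * Rpower (t + 1) a + Rpower t a
     = a * (Rpower (xi + 1) (a - 1) - Rpower xi (a - 1))) by nra.
  rewrite E1. replace (xi + 1 - xi) with 1 in Hze by ring.
  assert (0 <= a * (a-1)) by nra.
  nra.
Qed.

Definition P (a : R) (n : Z) : R := absp n a.
Definition G (a : R) (n : Z) : R := P a (n + 1) - P a n.
Definition c0 (a : R) : R := Rmin (a * (a - 1)) (Rpower 2 a - 2).

Lemma P_abs (a : R) (n : Z) : P a n = P a (Z.abs n).
Proof. unfold P, absp. rewrite Z.abs_involutive. reflexivity. Qed.

Lemma P_opp (a : R) (n : Z) : P a (- n) = P a n.
Proof. rewrite (P_abs a (-n)), Z.abs_opp, <- P_abs. reflexivity. Qed.

Lemma P_zero (a : R) : P a 0 = 0.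
Proof. unfold P, absp, rpow. simpl. destruct (Req_EM_T 0 0); [auto|lra]. Qed.

Lemma P_pos (a : R) (n : Z) : (0 < n)%Z -> P a n = Rpower (IZR n) a.
Proof.
  intros Hn. unfold P, absp, rpow. rewrite Z.abs_eq by lia.
  destruct (Req_EM_T (IZR n) 0) as [e|]; [|auto].
  apply eq_IZR in e. lia.
Qed.

Lemma P_nonneg (a : R) (n : Z) : 0 <= P a n.
Proof.
  unfold P, absp, rpow. destruct (Req_EM_T _ 0); [lra|]. left; apply Rpower_pos.
Qed.

Lemma two_pow_gt (a : R) : 1 < a < 2 -> 2 < Rpower 2 a < 4.
Proof.
  intros Ha. split.
  - rewrite <- (Rpower_1 2) at 1 by lra. apply Rpower_lt; lra.
  - replace 4 with (Rpower 2 (INR 2)).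
    + apply Rpower_lt; [lra|]. simpl. lra.
    + rewrite Rpower_pow by lra. simpl. ring.
Qed.

Lemma c0_pos (a : R) : 1 < a < 2 -> 0 < c0 a.
Proof.
  intros Ha. unfold c0. pose proof (two_pow_gt a Ha).
  apply Rmin_glb_lt; nra.
Qed.

Lemma c0_le1 (a : R) : c0 a <= a * (a - 1).
Proof. apply Rmin_l. Qed.
Lemma c0_le2 (a : R) : c0 a <= Rpower 2 a - 2.
Proof. apply Rmin_r. Qed.

Lemma E_def (a : R) (n : Z) : G a (n + 1) - G a n = P a (n + 2) - 2 * P a (n + 1) + P a n.
Proof. unfold G. replace (n + 1 + 1)%Z with (n + 2)%Z by lia. ring. Qed.

Lemma E_pos_case (a : R) (m : Z) : 1 < a < 2 -> (1 <= m)%Z ->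
  a * (a - 1) * Rpower (IZR m + 2) (a - 2) <= P a (m + 2) - 2 * P a (m + 1) + P a m.
Proof.
  intros Ha Hm.
  rewrite !P_pos by lia. rewrite !plus_IZR.
  apply sd_real; auto. apply IZR_le in Hm. lra.
Qed.

Lemma P_one (a : R) : P a 1 = 1.
Proof. rewrite P_pos by lia. apply Rpower_one_base. Qed.
Lemma P_two (a : R) : P a 2 = Rpower 2 a.
Proof. rewrite P_pos by lia. reflexivity. Qed.

Lemma P_m1 (a : R) : P a (-1) = 1.
Proof. rewrite P_abs. apply P_one. Qed.
Lemma P_m2 (a : R) : P a (-2) = Rpower 2 a.
Proof. rewrite P_abs. apply P_two. Qed.

Lemma E_bound (a : R) (n : Z) : 1 < a < 2 ->
  c0 a * Rpower (IZR (Z.abs n) + 2) (a - 2) <= G a (n + 1) - G a n.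
Proof.
  intros Ha. rewrite E_def.
  pose proof (c0_pos a Ha) as Hc. pose proof (c0_le1 a). pose proof (c0_le2 a).
  pose proof (two_pow_gt a Ha).
  assert (Hle1 : forall z, 1 <= z -> Rpower z (a - 2) <= 1).
  { intros z Hz. rewrite <- (Rpower_O z) by lra. apply Rle_Rpower; lra. }
  assert (HA : 0 <= IZR (Z.abs n)) by (apply IZR_le; lia).
  assert (Hp := Rpower_pos (IZR (Z.abs n) + 2) (a - 2)).
  destruct (Z_lt_le_dec 0 n) as [Hn|Hn].
  - rewrite Z.abs_eq by lia.
    pose proof (E_pos_case a n Ha ltac:(lia)).
    apply Rle_trans with (a * (a - 1) * Rpower (IZR n + 2) (a - 2)); [|auto].
    apply Rmult_le_compat_r; [left; apply Rpower_pos|auto].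
  - assert (Hb : c0 a * Rpower (IZR (Z.abs n) + 2) (a - 2) <= c0 a).
    { pose proof (Hle1 (IZR (Z.abs n) + 2) ltac:(lra)). nra. }
    destruct (Z.eq_dec n 0) as [->|Hn0].
    { replace (0+2)%Z with 2%Z in * by lia. replace (0+1)%Z with 1%Z by lia. rewrite P_two, P_one, P_zero. lra. }
    destruct (Z.eq_dec n (-1)) as [->|Hn1].
    { replace (-1+2)%Z with 1%Z by lia. replace (-1+1)%Z with 0%Z by lia. rewrite P_one, P_zero, P_m1. lra. }
    destruct (Z.eq_dec n (-2)) as [->|Hn2].
    { replace (-2+2)%Z with 0%Z by lia. replace (-2+1)%Z with (- 1)%Z by lia. rewrite P_zero, P_m1, P_m2. lra. }
    set (m := (- n - 2)%Z).
    assert (Hm : (1 <= m)%Z) by lia.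
    assert (Eq : P a (n + 2) - 2 * P a (n + 1) + P a n = P a (m + 2) - 2 * P a (m + 1) + P a m).
    { replace (n + 2)%Z with (- m)%Z by lia.
      replace (n + 1)%Z with (- (m + 1))%Z by lia.
      replace n with (- (m + 2))%Z by lia.
      rewrite !P_opp. ring. }
    rewrite Eq.
    pose proof (E_pos_case a m Ha Hm).
    assert (Hmon : Rpower (IZR (Z.abs n) + 2) (a - 2) <= Rpower (IZR m + 2) (a - 2)).
    { apply Rpower_antimono_base; [|lra]. split.
      - apply IZR_le in Hm. lra.
      - rewrite Z.abs_neq by lia. apply Rplus_le_compat_r. apply IZR_le. lia. }
    assert (0 <= a * (a-1)) by nra.
    apply Rle_trans with (a * (a - 1) * Rpower (IZR m + 2) (a - 2)); [|lra].
    apply Rle_trans with (a * (a - 1) * Rpower (IZR (Z.abs n) + 2) (a - 2)).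
    + apply Rmult_le_compat_r; lra.
    + apply Rmult_le_compat_l; lra.
Qed.

Definition kap (a : R) (K : Z) : R := Rpower (IZR K + 2) (a - 2).

Lemma kap_pos a K : 0 < kap a K.
Proof. apply Rpower_pos. Qed.

Lemma G_step (a : R) (K t : Z) : 1 < a < 2 -> (Z.abs t <= K)%Z ->
  c0 a * kap a K <= G a (t + 1) - G a t.
Proof.
  intros Ha Ht. eapply Rle_trans; [|apply E_bound; auto].
  apply Rmult_le_compat_l; [left; apply c0_pos; auto|].
  unfold kap. apply Rpower_antimono_base; [|lra]. split.
  - assert (0 <= IZR (Z.abs t)) by (apply IZR_le; lia). lra.
  - apply Rplus_le_compat_r. apply IZR_le. auto.
Qed.

Lemma G_step_nonneg (a : R) (t : Z) : 1 < a < 2 -> 0 <= G a (t + 1) - G a t.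
Proof.
  intros Ha. eapply Rle_trans; [|apply (G_step a (Z.abs t) t Ha); lia].
  left. apply Rmult_lt_0_compat; [apply c0_pos; auto|apply kap_pos].
Qed.

Lemma G_incr (a : R) (K v : Z) (n : nat) : 1 < a < 2 ->
  (forall t, (v <= t < v + Z.of_nat n)%Z -> (Z.abs t <= K)%Z) ->
  INR n * (c0 a * kap a K) <= G a (v + Z.of_nat n) - G a v.
Proof.
  intros Ha. induction n as [|n IH]; intros Hr.
  - replace (v + Z.of_nat 0)%Z with v by lia. simpl INR. lra.
  - rewrite S_INR. replace (v + Z.of_nat (S n))%Z with ((v + Z.of_nat n) + 1)%Z by lia.
    pose proof (G_step a K (v + Z.of_nat n) Ha (Hr (v + Z.of_nat n)%Z ltac:(lia))).
    assert (IH' := IH (fun t Ht => Hr t ltac:(lia))). lra.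
Qed.

Lemma G_mono (a : R) (u v : Z) : 1 < a < 2 -> (v <= u)%Z -> G a v <= G a u.
Proof.
  intros Ha Hvu. replace u with (v + Z.of_nat (Z.to_nat (u - v)))%Z by lia.
  induction (Z.to_nat (u - v)) as [|n IH].
  - replace (v + Z.of_nat 0)%Z with v by lia. lra.
  - replace (v + Z.of_nat (S n))%Z with ((v + Z.of_nat n) + 1)%Z by lia.
    pose proof (G_step_nonneg a (v + Z.of_nat n) Ha). lra.
Qed.

Lemma mixed (a : R) (K x : Z) (d n : nat) : 1 < a < 2 ->
  (forall t, (x <= t < x + Z.of_nat d + Z.of_nat n)%Z -> (Z.abs t <= K)%Z) ->
  INR n * INR d * (c0 a * kap a K) <=
  (P a (x + Z.of_nat d + Z.of_nat n) - P a (x + Z.of_nat d))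
  - (P a (x + Z.of_nat n) - P a x).
Proof.
  intros Ha. induction n as [|n IH]; intros Hr.
  - replace (x + Z.of_nat d + Z.of_nat 0)%Z with (x + Z.of_nat d)%Z by lia.
    replace (x + Z.of_nat 0)%Z with x by lia. simpl INR. lra.
  - rewrite S_INR.
    assert (IH' := IH (fun t Ht => Hr t ltac:(lia))).
    pose proof (G_incr a K (x + Z.of_nat n) d Ha (fun t Ht => Hr t ltac:(lia))) as Hg.
    unfold G in Hg.
    replace (x + Z.of_nat n + Z.of_nat d + 1)%Z with (x + Z.of_nat d + Z.of_nat (S n))%Z in Hg by lia.
    replace (x + Z.of_nat n + Z.of_nat d)%Z with (x + Z.of_nat d + Z.of_nat n)%Z in Hg by lia.
    replace (x + Z.of_nat n + 1)%Z with (x + Z.of_nat (S n))%Z in Hg by lia.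
    lra.
Qed.

Definition Fa (a : R) (b x : Z) : R := P a x - P a (x + b).

Lemma Fa_sep_le (a : R) (K b x y : Z) : 1 < a < 2 -> b <> 0%Z ->
  (Z.abs x <= K)%Z -> (Z.abs y <= K)%Z -> (Z.abs (x + b) <= K)%Z -> (Z.abs (y + b) <= K)%Z ->
  (x <= y)%Z ->
  IZR (Z.abs (y - x)) * IZR (Z.abs b) * (c0 a * kap a K) <= Rabs (Fa a b y - Fa a b x).
Proof.
  intros Ha Hb Hx Hy Hxb Hyb Hxy.
  assert (Hpos : 0 <= c0 a * kap a K) by (left; apply Rmult_lt_0_compat; [apply c0_pos; auto|apply kap_pos]).
  set (d := Z.to_nat (y - x)).
  assert (Hd : y = (x + Z.of_nat d)%Z) by (unfold d; lia).
  assert (HdR : IZR (Z.abs (y - x)) = INR d).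
  { rewrite INR_IZR_INZ. f_equal. unfold d. lia. }
  rewrite HdR.
  destruct (Z_lt_le_dec 0 b) as [hb|hb].
  - set (n := Z.to_nat b).
    assert (Hn : b = Z.of_nat n) by (unfold n; lia).
    assert (HnR : IZR (Z.abs b) = INR n) by (rewrite INR_IZR_INZ; f_equal; unfold n; lia).
    rewrite HnR.
    pose proof (mixed a K x d n Ha (fun t Ht => ltac:(lia))) as M.
    assert (0 <= INR n * INR d * (c0 a * kap a K)).
    { apply Rmult_le_pos; auto. apply Rmult_le_pos; apply pos_INR. }
    unfold Fa. rewrite Hd, Hn. rewrite Rabs_left1.
    + lra.
    + lra.
  - set (n := Z.to_nat (- b)).
    assert (Hn : b = (- Z.of_nat n)%Z) by (unfold n; lia).
    assert (HnR : IZR (Z.abs b) = INR n) by (rewrite INR_IZR_INZ; f_equal; unfold n; lia).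
    rewrite HnR.
    pose proof (mixed a K (x + b) d n Ha (fun t Ht => ltac:(lia))) as M.
    unfold Fa.
    replace (x + b + Z.of_nat d + Z.of_nat n)%Z with y in M by lia.
    replace (x + b + Z.of_nat d)%Z with (y + b)%Z in M by lia.
    replace (x + b + Z.of_nat n)%Z with x in M by lia.
    rewrite Rabs_right.
    + lra.
    + assert (0 <= INR n * INR d * (c0 a * kap a K)).
      { apply Rmult_le_pos; auto. apply Rmult_le_pos; apply pos_INR. }
      lra.
Qed.

Lemma Fa_sep (a : R) (K b x y : Z) : 1 < a < 2 -> b <> 0%Z ->
  (Z.abs x <= K)%Z -> (Z.abs y <= K)%Z -> (Z.abs (x + b) <= K)%Z -> (Z.abs (y + b) <= K)%Z ->
  IZR (Z.abs (y - x)) * IZR (Z.abs b) * (c0 a * kap a K) <= Rabs (Fa a b y - Fa a b x).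
Proof.
  intros Ha Hb Hx Hy Hxb Hyb.
  destruct (Z_le_gt_dec x y) as [h|h]; [apply Fa_sep_le; auto|].
  rewrite Rabs_minus_sym. replace (Z.abs (y - x)) with (Z.abs (x - y)) by lia.
  apply Fa_sep_le; auto; lia.
Qed.

Lemma in_zrange (a x : Z) : (0 <= a)%Z -> In x (zrange a) <-> (Z.abs x <= a)%Z.
Proof.
  intros Ha. unfold zrange. rewrite in_map_iff. split.
  - intros [i [Hi Hin]]. apply in_seq in Hin. lia.
  - intros Hx. exists (Z.to_nat (x + a)). split; [lia|]. apply in_seq. lia.
Qed.

Lemma NoDup_zrange (a : Z) : NoDup (zrange a).
Proof.
  unfold zrange. apply NoDup_map_NoDup_ForallPairs; [|apply seq_NoDup].
  intros i j _ _ H. lia.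
Qed.

Lemma diam_count (l : list Z) (D : R) : NoDup l -> 0 <= D ->
  (forall x y, In x l -> In y l -> IZR (Z.abs (x - y)) <= D) ->
  INR (length l) <= 2 * D + 1.
Proof.
  intros Hnd HD Hd. destruct l as [|x0 l'].
  - simpl. lra.
  - destruct (archimed D) as [Hu1 Hu2].
    set (n := (up D - 1)%Z).
    assert (Hn0 : (0 <= n)%Z).
    { unfold n. assert (IZR 0 < IZR (up D)) by lra. apply lt_IZR in H. lia. }
    set (sup := map (fun i => (x0 - n + Z.of_nat i)%Z) (seq 0 (Z.to_nat (2 * n + 1)))).
    assert (Hinc : incl (x0 :: l') sup).
    { intros y Hy. unfold sup. apply in_map_iff.
      assert (Hy' : (Z.abs (y - x0) <= n)%Z).
      { pose proof (Hd y x0 Hy (or_introl eq_refl)).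
        assert (IZR (Z.abs (y - x0)) < IZR (up D)) by lra.
        apply lt_IZR in H0. unfold n. lia. }
      exists (Z.to_nat (y - x0 + n)). split; [lia|]. apply in_seq. lia. }
    pose proof (NoDup_incl_length Hnd Hinc) as Hle.
    unfold sup in Hle. rewrite length_map, length_seq in Hle.
    apply le_INR in Hle.
    assert (E : INR (Z.to_nat (2 * n + 1)) = 2 * IZR n + 1).
    { rewrite INR_IZR_INZ. rewrite Z2Nat.id by lia. rewrite plus_IZR, mult_IZR. reflexivity. }
    rewrite E in Hle. unfold n in Hle. rewrite minus_IZR in Hle. lra.
Qed.

Lemma line_count (a C0 : R) (L b : Z) (mu : R) (l : list Z) : 1 < a < 2 -> b <> 0%Z ->
  (0 <= L)%Z -> 0 <= C0 -> NoDup l ->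
  (forall x, In x l -> ((Z.abs x <= L)%Z \/ (Z.abs (x + b) <= L)%Z) /\ Rabs (Fa a b x - mu) <= C0) ->
  INR (length l) <= 2 * (2 * C0 * Rpower (IZR (L + Z.abs b) + 2) (2 - a) / (c0 a * IZR (Z.abs b))) + 1.
Proof.
  intros Ha Hb HL HC Hnd Hl.
  set (K := (L + Z.abs b)%Z).
  assert (Hc := c0_pos a Ha). assert (Hk := kap_pos a K).
  assert (Hbp : 0 < IZR (Z.abs b)) by (apply IZR_lt; lia).
  assert (Hinv : Rpower (IZR K + 2) (2 - a) = / kap a K).
  { unfold kap. pose proof (Rpower_inv_mul (IZR K + 2) (a - 2)).
    replace (- (a - 2)) with (2 - a) in H by ring.
    assert (0 < Rpower (IZR K + 2) (a - 2)) by apply Rpower_pos.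
    field_simplify_eq; [|lra]. lra. }
  apply diam_count; auto.
  - rewrite Hinv. apply Rmult_le_pos; [|left; apply Rinv_0_lt_compat; nra].
    apply Rmult_le_pos; [lra|left; apply Rinv_0_lt_compat; auto].
  - intros x y Hx Hy.
    destruct (Hl x Hx) as [Bx Vx]. destruct (Hl y Hy) as [By Vy].
    pose proof (Fa_sep a K b y x Ha Hb ltac:(unfold K; lia) ltac:(unfold K; lia)
                  ltac:(unfold K; lia) ltac:(unfold K; lia)) as S.
    assert (Rabs (Fa a b x - Fa a b y) <= 2 * C0).
    { replace (Fa a b x - Fa a b y) with ((Fa a b x - mu) - (Fa a b y - mu)) by ring.
      eapply Rle_trans; [apply Rabs_triang|]. rewrite Rabs_Ropp. lra. }
    rewrite Hinv.
    assert (Hpp : 0 < IZR (Z.abs b) * (c0 a * kap a K)) by (apply Rmult_lt_0_compat; auto; nra).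
    apply (Rmult_le_reg_r (IZR (Z.abs b) * (c0 a * kap a K))); auto.
    replace (2 * C0 * / kap a K / (c0 a * IZR (Z.abs b)) * (IZR (Z.abs b) * (c0 a * kap a K)))
      with (2 * C0) by (field; lra).
    lra.
Qed.

Definition sumL {A : Type} (l : list A) (f : A -> R) : R :=
  fold_right (fun x acc => f x + acc) 0 l.

Definition indb (b : bool) : R := if b then 1 else 0.

Lemma ind_nonneg b : 0 <= indb b.
Proof. destruct b; simpl; lra. Qed.

Lemma sumL_app {A} (l1 l2 : list A) f : sumL (l1 ++ l2) f = sumL l1 f + sumL l2 f.
Proof. induction l1; simpl; [ring|]. unfold sumL in *. simpl. rewrite IHl1. ring. Qed.

Lemma sumL_map {A B} (g : A -> B) (l : list A) f : sumL (map g l) f = sumL l (fun x => f (g x)).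
Proof. induction l; simpl; auto. unfold sumL in *; simpl; rewrite IHl; auto. Qed.

Lemma sumL_le {A} (l : list A) f g : (forall x, In x l -> f x <= g x) -> sumL l f <= sumL l g.
Proof.
  induction l as [|x l IH]; intros H; simpl; [lra|].
  pose proof (H x (or_introl eq_refl)). pose proof (IH (fun y Hy => H y (or_intror Hy))).
  unfold sumL in *; simpl. lra.
Qed.

Lemma sumL_nonneg {A} (l : list A) f : (forall x, In x l -> 0 <= f x) -> 0 <= sumL l f.
Proof.
  induction l as [|x l IH]; intros H; simpl; [lra|].
  pose proof (H x (or_introl eq_refl)). pose proof (IH (fun y Hy => H y (or_intror Hy))).
  unfold sumL in *; simpl. lra.
Qed.

Lemma sumL_plus {A} (l : list A) f g : sumL l (fun x => f x + g x) = sumL l f + sumL l g.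
Proof. induction l; unfold sumL in *; simpl; [ring|]. rewrite IHl. ring. Qed.

Lemma sumL_scal {A} (l : list A) c f : sumL l (fun x => c * f x) = c * sumL l f.
Proof. induction l; unfold sumL in *; simpl; [ring|]. rewrite IHl. ring. Qed.

Lemma sumL_const {A} (l : list A) c : sumL l (fun _ => c) = c * INR (length l).
Proof.
  induction l; unfold sumL in *; simpl length; [simpl; ring|].
  rewrite S_INR. simpl. rewrite IHl. ring.
Qed.

Lemma sumL_swap {A B} (l1 : list A) (l2 : list B) (f : A -> B -> R) :
  sumL l1 (fun x => sumL l2 (fun y => f x y)) = sumL l2 (fun y => sumL l1 (fun x => f x y)).
Proof.
  induction l1 as [|x l1 IH].
  - change (0 = sumL l2 (fun _ => 0)). rewrite sumL_const. ring.
  - change (sumL l2 (fun y => f x y) + sumL l1 (fun x0 => sumL l2 (fun y => f x0 y)) =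
      sumL l2 (fun y => f x y + sumL l1 (fun x0 => f x0 y))).
    rewrite sumL_plus, IH. reflexivity.
Qed.

Lemma length_filter_sum {A} (q : A -> bool) (l : list A) :
  INR (length (filter q l)) = sumL l (fun x => indb (q x)).
Proof.
  induction l as [|x l IH]; [reflexivity|].
  change (sumL (x :: l) (fun x => indb (q x))) with (indb (q x) + sumL l (fun x => indb (q x))).
  simpl filter. destruct (q x); simpl length; unfold indb at 1.
  - rewrite S_INR, IH. ring.
  - rewrite IH. ring.
Qed.

Lemma sumL_prod {A B} (l1 : list A) (l2 : list B) f :
  sumL (list_prod l1 l2) f = sumL l1 (fun x => sumL l2 (fun y => f (x, y))).
Proof.
  induction l1 as [|x l1 IH]; simpl; [reflexivity|].
  rewrite sumL_app, sumL_map, IH. reflexivity.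
Qed.

Lemma sumL_collapse {A} (l : list A) (q : A -> bool) (u0 : A) : NoDup l ->
  (forall u, q u = true -> u = u0) -> sumL l (fun u => indb (q u)) <= indb (q u0).
Proof.
  intros Hnd Hq. induction Hnd as [|x l Hx Hnd IH]; simpl.
  - apply ind_nonneg.
  - unfold sumL in *; simpl.
    destruct (q x) eqn:E.
    + assert (x = u0) by (apply Hq; auto). subst x. rewrite E.
      assert (fold_right (fun x acc => indb (q x) + acc) 0 l = 0).
      { clear IH. induction l as [|y l IHl]; simpl; [reflexivity|].
        destruct (q y) eqn:Ey.
        - exfalso. apply Hx. left. apply Hq. auto.
        - change (indb false) with 0. rewrite IHl. ring. intros Hc. apply Hx. right. auto.
          inversion Hnd; auto. }
      change (indb true) with 1. lra.
    + change (indb false) with 0. lra.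
Qed.

Lemma sumL_incl {A} (l1 l2 : list A) f : NoDup l1 -> incl l1 l2 ->
  (forall x, In x l2 -> 0 <= f x) -> sumL l1 f <= sumL l2 f.
Proof.
  intros Hnd. revert l2. induction Hnd as [|x l1 Hx Hnd IH]; intros l2 Hinc Hf.
  - simpl. apply sumL_nonneg; auto.
  - assert (Hin : In x l2) by (apply Hinc; left; auto).
    destruct (in_split x l2 Hin) as [la [lb Heq]]. subst l2.
    rewrite sumL_app. simpl. unfold sumL at 3; simpl. fold (sumL lb f).
    assert (sumL l1 f <= sumL (la ++ lb) f).
    { apply IH.
      - intros y Hy. assert (In y (la ++ x :: lb)) by (apply Hinc; right; auto).
        apply in_app_or in H. apply in_or_app. destruct H as [H|[H|H]]; auto.
        subst; contradiction.
      - intros y Hy. apply Hf. apply in_app_or in Hy. apply in_or_app. simpl. tauto. }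
    rewrite sumL_app in H. unfold sumL at 1; simpl. fold (sumL l1 f). lra.
Qed.

Lemma ln_le' (x y : R) : 0 < x -> x <= y -> ln x <= ln y.
Proof. intros Hx [H|H]; [left; apply ln_increasing; auto|subst; lra]. Qed.

Lemma ln3_ge1 : 1 <= ln 3.
Proof. replace 1 with (ln (exp 1)) at 1 by apply ln_exp. apply ln_le'. apply exp_pos. apply exp_le_3. Qed.

Lemma harm_step (n : R) : 1 <= n -> / (n + 1) <= ln (n + 1) - ln n.
Proof.
  intros Hn.
  pose proof (exp_ineq1_le (- / (n + 1))) as He.
  assert (Hp : 0 < 1 + - / (n + 1)).
  { assert (/ (n + 1) < 1). { apply (Rmult_lt_reg_r (n+1)); [lra|]. field_simplify; lra. } lra. }
  apply ln_le' in He; auto. rewrite ln_exp in He.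
  replace (1 + - / (n + 1)) with (n * / (n + 1)) in He by (field; lra).
  rewrite ln_mult, ln_Rinv in He by (try apply Rinv_0_lt_compat; lra). lra.
Qed.

Definition Hh (n : nat) : R := sumL (seq 1 n) (fun j => / INR j).

Lemma H_S (n : nat) : Hh (S n) = Hh n + / INR (S n).
Proof.
  unfold Hh. rewrite seq_S, sumL_app.
  change (sumL [(1 + n)%nat] (fun j => / INR j)) with (/ INR (1 + n) + 0).
  replace (1 + n)%nat with (S n) by lia. ring.
Qed.

Lemma H_le (n : nat) : (1 <= n)%nat -> Hh n <= 1 + ln (INR n).
Proof.
  induction n as [|n IH]; intros Hn; [lia|].
  destruct (Nat.eq_dec n 0) as [->|Hn0].
  - unfold Hh. simpl. unfold sumL. simpl. rewrite ln_1. lra.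
  - rewrite H_S. specialize (IH ltac:(lia)).
    rewrite S_INR. assert (Hn1 : 1 <= INR n) by (apply (le_INR 1); lia).
    pose proof (harm_step (INR n) Hn1). lra.
Qed.

Lemma sumL_ext {A} (l : list A) f g : (forall x, In x l -> f x = g x) -> sumL l f = sumL l g.
Proof. intros Hfg. apply Rle_antisym; apply sumL_le; intros; rewrite Hfg; auto; lra. Qed.

Lemma sumL_incl2 {A} (l1 l2 : list A) f : NoDup l1 ->
  (forall x, In x l1 -> f x = 0 \/ In x l2) ->
  (forall x, In x l1 -> 0 <= f x) -> (forall x, In x l2 -> 0 <= f x) ->
  sumL l1 f <= sumL l2 f.
Proof.
  intros Hnd. revert l2. induction Hnd as [|x l1 Hx Hnd IH]; intros l2 Hinc Hf1 Hf.
  - simpl. apply sumL_nonneg; auto.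
  - destruct (Hinc x (or_introl eq_refl)) as [H0|Hin].
    + change (sumL (x :: l1) f) with (f x + sumL l1 f). rewrite H0.
      assert (sumL l1 f <= sumL l2 f).
      { apply IH; auto; intros y Hy; [apply Hinc|apply Hf1]; right; auto. }
      lra.
    + destruct (in_split x l2 Hin) as [la [lb Heq]]. subst l2.
      rewrite sumL_app. change (sumL (x :: lb) f) with (f x + sumL lb f).
      change (sumL (x :: l1) f) with (f x + sumL l1 f).
      assert (HIH : sumL l1 f <= sumL (la ++ lb) f).
      { apply IH.
        - intros y Hy. destruct (Hinc y (or_intror Hy)) as [Hz|Hy2]; [left; auto|right].
          apply in_app_or in Hy2. apply in_or_app. destruct Hy2 as [Hy2|[Hy2|Hy2]]; auto.
          subst; contradiction.
        - intros y Hy. apply Hf1. right. auto.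
        - intros y Hy. apply Hf. apply in_app_or in Hy. apply in_or_app. simpl. tauto. }
      rewrite sumL_app in HIH. lra.
Qed.

Definition invZ (b : Z) : R := if Z.eq_dec b 0 then 0 else / IZR (Z.abs b).

Lemma invZ_nonneg b : 0 <= invZ b.
Proof.
  unfold invZ. destruct (Z.eq_dec b 0); [lra|].
  left. apply Rinv_0_lt_compat. apply IZR_lt. lia.
Qed.

Lemma invZ_le1 b : invZ b <= 1.
Proof.
  unfold invZ. destruct (Z.eq_dec b 0); [lra|].
  assert (1 <= IZR (Z.abs b)) by (apply IZR_le; lia).
  rewrite <- Rinv_1. apply Rinv_le_contravar; lra.
Qed.

Lemma invsum_range (n : Z) : (1 <= n)%Z ->
  sumL (zrange n) invZ <= 2 * (1 + ln (IZR n)).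
Proof.
  intros Hn. set (nn := Z.to_nat n).
  set (l2 := map Z.of_nat (seq 1 nn) ++ map (fun j => (- Z.of_nat j)%Z) (seq 1 nn)).
  apply Rle_trans with (sumL l2 invZ).
  - apply sumL_incl2; [apply NoDup_zrange| |intros; apply invZ_nonneg|intros; apply invZ_nonneg].
    intros x Hx. apply in_zrange in Hx; [|lia].
    destruct (Z.eq_dec x 0) as [->|Hx0].
    + left. reflexivity.
    + right. unfold l2. apply in_or_app. destruct (Z_lt_le_dec 0 x).
      * left. apply in_map_iff. exists (Z.to_nat x). split; [lia|]. apply in_seq. unfold nn. lia.
      * right. apply in_map_iff. exists (Z.to_nat (- x)). split; [lia|]. apply in_seq. unfold nn. lia.
  - unfold l2. rewrite sumL_app, !sumL_map.
    assert (E : forall g : nat -> Z, (forall j, Z.abs (g j) = Z.of_nat j) ->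
      sumL (seq 1 nn) (fun j => invZ (g j)) = Hh nn).
    { intros g Hg. unfold Hh. apply sumL_ext. intros j Hj. apply in_seq in Hj.
      unfold invZ. destruct (Z.eq_dec (g j) 0) as [e|]; [specialize (Hg j); lia|].
      rewrite Hg, <- INR_IZR_INZ. reflexivity. }
    rewrite (E Z.of_nat) by (intros; lia). rewrite (E (fun j => (- Z.of_nat j)%Z)) by (intros; lia).
    assert (HnR : INR nn = IZR n) by (unfold nn; rewrite INR_IZR_INZ; f_equal; lia).
    pose proof (H_le nn ltac:(unfold nn; lia)) as HHl. rewrite HnR in HHl. lra.
Qed.

Lemma length_zrange (n : Z) : (0 <= n)%Z -> INR (length (zrange n)) = 2 * IZR n + 1.
Proof.
  intros Hn. unfold zrange. rewrite length_map, length_seq.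
  rewrite INR_IZR_INZ, Z2Nat.id by lia. rewrite plus_IZR, mult_IZR. reflexivity.
Qed.

Lemma invsum_shift (N k : Z) : (1 <= N)%Z ->
  sumL (zrange N) (fun x => invZ (x - k)) <= 2 * (1 + ln (IZR (3 * N))) + 3.
Proof.
  intros HN. destruct (Z_le_gt_dec (Z.abs k) (2 * N)) as [hk|hk].
  - rewrite <- (sumL_map (fun x => (x - k)%Z) (zrange N) invZ).
    pose proof (invsum_range (3 * N) ltac:(lia)).
    cut (sumL (map (fun x => (x - k)%Z) (zrange N)) invZ <= sumL (zrange (3 * N)) invZ); [lra|].
    apply sumL_incl; [| |intros; apply invZ_nonneg].
    + apply NoDup_map_NoDup_ForallPairs; [|apply NoDup_zrange]. intros x y _ _ E; lia.
    + intros b Hb. apply in_map_iff in Hb. destruct Hb as [x [<- Hx]].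
      apply in_zrange in Hx; [|lia]. apply in_zrange; lia.
  - apply Rle_trans with (sumL (zrange N) (fun _ => / IZR N)).
    + apply sumL_le. intros x Hx. apply in_zrange in Hx; [|lia].
      unfold invZ. destruct (Z.eq_dec (x - k) 0); [left; apply Rinv_0_lt_compat; apply IZR_lt; lia|].
      apply Rinv_le_contravar; [apply IZR_lt; lia|]. apply IZR_le. lia.
    + rewrite sumL_const, length_zrange by lia.
      assert (HNr : 1 <= IZR N) by (apply IZR_le; lia).
      assert (0 <= ln (IZR (3 * N))).
      { rewrite <- ln_1. apply ln_le'; [lra|]. apply IZR_le; lia. }
      replace (/ IZR N * (2 * IZR N + 1)) with (2 + / IZR N) by (field; lra).
      assert (/ IZR N <= 1) by (rewrite <- Rinv_1; apply Rinv_le_contravar; lra). lra.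
Qed.

Definition gL (a C0 : R) (L b : Z) : R :=
  if Z.eq_dec b 0 then 0 else
  2 * (2 * C0 * Rpower (IZR (L + Z.abs b) + 2) (2 - a) / (c0 a * IZR (Z.abs b))) + 1.

Lemma gL_opp a C0 L b : gL a C0 L (- b) = gL a C0 L b.
Proof.
  unfold gL. rewrite Z.abs_opp.
  destruct (Z.eq_dec (-b) 0), (Z.eq_dec b 0); try lia; reflexivity.
Qed.

Lemma Rpower_sum_le (x y e : R) : 1 <= x -> 1 <= y -> 0 <= e <= 1 ->
  Rpower (x + y) e <= 2 * (Rpower x e + Rpower y e).
Proof.
  intros Hx Hy He. set (M := Rmax x y).
  assert (HM : x + y <= 2 * M) by (unfold M; pose proof (Rmax_l x y); pose proof (Rmax_r x y); lra).
  apply Rle_trans with (Rpower (2 * M) e).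
  { apply Rle_Rpower_l; lra. }
  rewrite <- Rpower_mult_distr by (unfold M; pose proof (Rmax_l x y); lra).
  assert (Rpower 2 e <= 2) by (apply Rpower_le_self; lra).
  assert (Rpower M e <= Rpower x e + Rpower y e).
  { unfold M. pose proof (Rpower_pos x e). pose proof (Rpower_pos y e).
    destruct (Rle_dec x y).
    - rewrite Rmax_right by lra. lra.
    - rewrite Rmax_left by lra. lra. }
  pose proof (Rpower_pos M e). pose proof (Rpower_pos 2 e). nra.
Qed.

Lemma gL_bound (a C0 : R) (L b : Z) : 1 < a < 2 -> 0 <= C0 -> (1 <= L)%Z ->
  gL a C0 L b <= (8 * C0 / c0 a) * 3 * Rpower (IZR L) (2 - a) * invZ b + (8 * C0 / c0 a + 1).
Proof.
  intros Ha HC HL.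
  assert (Hc := c0_pos a Ha).
  assert (HA : 0 <= 8 * C0 / c0 a) by (apply Rmult_le_pos; [lra|left; apply Rinv_0_lt_compat; auto]).
  assert (HLr : 1 <= IZR L) by (apply IZR_le; lia).
  pose proof (Rpower_pos (IZR L) (2 - a)).
  unfold gL, invZ. destruct (Z.eq_dec b 0) as [_|Hb].
  { nra. }
  assert (Hbr : 1 <= IZR (Z.abs b)) by (apply IZR_le; lia).
  set (beta := 2 - a).
  assert (Hbeta : 0 <= beta <= 1) by (unfold beta; lra).
  assert (S1 : Rpower (IZR (L + Z.abs b) + 2) beta <=
               2 * (Rpower (IZR L + 2) beta + Rpower (IZR (Z.abs b)) beta)).
  { rewrite plus_IZR. replace (IZR L + IZR (Z.abs b) + 2) with ((IZR L + 2) + IZR (Z.abs b)) by ring.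
    apply Rpower_sum_le; lra. }
  assert (S2 : Rpower (IZR L + 2) beta <= 3 * Rpower (IZR L) beta).
  { apply Rle_trans with (Rpower (3 * IZR L) beta).
    - apply Rle_Rpower_l; lra.
    - rewrite <- Rpower_mult_distr by lra.
      assert (Rpower 3 beta <= 3) by (apply Rpower_le_self; lra). pose proof (Rpower_pos (IZR L) beta). nra. }
  assert (S3 : Rpower (IZR (Z.abs b)) beta <= IZR (Z.abs b)) by (apply Rpower_le_self; lra).
  assert (Hib : 0 < / IZR (Z.abs b)) by (apply Rinv_0_lt_compat; lra).
  set (X := Rpower (IZR (L + Z.abs b) + 2) beta) in *.
  set (Y := Rpower (IZR L) beta) in *.
  replace (2 * (2 * C0 * X / (c0 a * IZR (Z.abs b))) + 1) with
    ((4 * C0 / c0 a) * (X * / IZR (Z.abs b)) + 1) by (field; lra).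
  assert (X * / IZR (Z.abs b) <= 2 * (3 * Y * / IZR (Z.abs b) + 1)).
  { apply Rle_trans with (2 * (3 * Y + IZR (Z.abs b)) * / IZR (Z.abs b)).
    - apply Rmult_le_compat_r; lra.
    - right. field. lra. }
  assert (H4 : 0 <= 4 * C0 / c0 a) by (apply Rmult_le_pos; [lra|left; apply Rinv_0_lt_compat; auto]).
  replace (8 * C0 / c0 a) with (2 * (4 * C0 / c0 a)) by (field; lra).
  nra.
Qed.

Definition bnd' (a : R) (L N : Z) : R := Rpower (IZR L) (2 - a) * ln (2 + IZR N) + IZR N.

Lemma ln2N_ge1 (N : Z) : (1 <= N)%Z -> 1 <= ln (2 + IZR N).
Proof.
  intros HN. pose proof ln3_ge1. assert (ln 3 <= ln (2 + IZR N)).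
  { apply ln_le'; [lra|]. assert (1 <= IZR N) by (apply IZR_le; lia). lra. }
  lra.
Qed.

Lemma gsum (a C0 : R) (L N k : Z) : 1 < a < 2 -> 0 <= C0 -> (1 <= L)%Z -> (1 <= N)%Z ->
  sumL (zrange N) (fun x => gL a C0 L (x - k)) <= (30 * (8 * C0 / c0 a) + 3) * bnd' a L N.
Proof.
  intros Ha HC HL HN.
  set (A := 8 * C0 / c0 a).
  assert (Hc := c0_pos a Ha).
  assert (HA : 0 <= A) by (apply Rmult_le_pos; [lra|left; apply Rinv_0_lt_compat; auto]).
  set (Y := Rpower (IZR L) (2 - a)).
  assert (HY : 0 < Y) by apply Rpower_pos.
  apply Rle_trans with (sumL (zrange N) (fun x => (A * 3 * Y) * invZ (x - k) + (A + 1))).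
  { apply sumL_le. intros x _. apply gL_bound; auto. }
  rewrite sumL_plus, sumL_scal, sumL_const, length_zrange by lia.
  pose proof (invsum_shift N k HN) as Hs.
  assert (HNr : 1 <= IZR N) by (apply IZR_le; lia).
  assert (Hl3 : ln (IZR (3 * N)) <= 2 * ln (2 + IZR N)).
  { rewrite mult_IZR, ln_mult by lra.
    pose proof ln3_ge1. assert (ln 3 <= ln (2 + IZR N)) by (apply ln_le'; lra).
    assert (ln (IZR N) <= ln (2 + IZR N)) by (apply ln_le'; lra). lra. }
  pose proof (ln2N_ge1 N HN).
  assert (Hs' : sumL (zrange N) (fun x => invZ (x - k)) <= 9 * ln (2 + IZR N)) by lra.
  unfold bnd'. fold Y.
  assert (0 <= A * 3 * Y) by nra.
  assert (A * 3 * Y * sumL (zrange N) (fun x => invZ (x - k)) <= A * 3 * Y * (9 * ln (2 + IZR N)))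
    by (apply Rmult_le_compat_l; auto).
  nra.
Qed.

Lemma inS_true a C0 m N N1 N2 N3 k k1 k2 k3 :
  inS a C0 m N N1 N2 N3 k k1 k2 k3 = true ->
  k = (k1 - k2 + k3)%Z /\ k2 <> k1 /\ k2 <> k3 /\
  Rabs (P a k1 - P a k2 + P a k3 - P a k - m) <= C0 /\
  (Z.abs k <= N)%Z /\ (Z.abs k1 <= N1)%Z /\ (Z.abs k2 <= N2)%Z /\ (Z.abs k3 <= N3)%Z.
Proof.
  unfold inS. intros Hq.
  repeat (apply andb_prop in Hq; destruct Hq as [Hq ?]).
  apply Z.eqb_eq in Hq.
  repeat match goal with
  | h : negb _ = true |- _ => apply negb_true_iff in h; apply Z.eqb_neq in h
  | h : Z.leb _ _ = true |- _ => apply Z.leb_le in h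
  | h : (if Rle_dec ?x ?y then true else false) = true |- _ =>
      destruct (Rle_dec x y); [clear h|discriminate]
  end.
  unfold P. repeat split; auto;
  intro e; subst; rewrite Z.eqb_refl in *; discriminate.
Qed.

Lemma line_gL (a C0 : R) (L M b : Z) (mu : R) (q : Z -> bool) : 1 < a < 2 -> 0 <= C0 ->
  (0 <= L)%Z ->
  (forall x, q x = true -> b <> 0%Z /\ ((Z.abs x <= L)%Z \/ (Z.abs (x + b) <= L)%Z) /\
     Rabs (Fa a b x - mu) <= C0) ->
  sumL (zrange M) (fun x => indb (q x)) <= gL a C0 L b.
Proof.
  intros Ha HC HL Hq. rewrite <- length_filter_sum.
  unfold gL. destruct (Z.eq_dec b 0) as [Hb|Hb].
  - destruct (filter q (zrange M)) as [|x l] eqn:E; [simpl; lra|].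
    exfalso. assert (In x (filter q (zrange M))) by (rewrite E; left; auto).
    apply filter_In in H. destruct (Hq x (proj2 H)). auto.
  - apply (line_count a C0 L b mu); auto.
    + apply NoDup_filter, NoDup_zrange.
    + intros x Hx. apply filter_In in Hx. destruct (Hq x (proj2 Hx)) as [_ [? ?]]. auto.
Qed.

Lemma card_Sk_sum a C0 m N N1 N2 N3 k :
  INR (card_Sk a C0 m N N1 N2 N3 k) = sumL (zrange N1) (fun k1 => sumL (zrange N2) (fun k2 =>
    sumL (zrange N3) (fun k3 => indb (inS a C0 m N N1 N2 N3 k k1 k2 k3)))).
Proof. unfold card_Sk, box3. rewrite length_filter_sum, !sumL_prod. reflexivity. Qed.

Lemma card_Sk1_sum a C0 m N N1 N2 N3 k1 :
  INR (card_Sk1 a C0 m N N1 N2 N3 k1) = sumL (zrange N) (fun k => sumL (zrange N2) (fun k2 =>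
    sumL (zrange N3) (fun k3 => indb (inS a C0 m N N1 N2 N3 k k1 k2 k3)))).
Proof. unfold card_Sk1, box3. rewrite length_filter_sum, !sumL_prod. reflexivity. Qed.

Lemma card_Sk2_sum a C0 m N N1 N2 N3 k2 :
  INR (card_Sk2 a C0 m N N1 N2 N3 k2) = sumL (zrange N) (fun k => sumL (zrange N1) (fun k1 =>
    sumL (zrange N3) (fun k3 => indb (inS a C0 m N N1 N2 N3 k k1 k2 k3)))).
Proof. unfold card_Sk2, box3. rewrite length_filter_sum, !sumL_prod. reflexivity. Qed.

Lemma card_Sk3_sum a C0 m N N1 N2 N3 k3 :
  INR (card_Sk3 a C0 m N N1 N2 N3 k3) = sumL (zrange N) (fun k => sumL (zrange N1) (fun k1 =>
    sumL (zrange N2) (fun k2 => indb (inS a C0 m N N1 N2 N3 k k1 k2 k3)))).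
Proof. unfold card_Sk3, box3. rewrite length_filter_sum, !sumL_prod. reflexivity. Qed.

Definition Cg (a C0 : R) : R := 30 * (8 * C0 / c0 a) + 3.

Lemma P_arg a u v : u = v -> P a u = P a v.
Proof. intros ->. reflexivity. Qed.

Lemma Rabs_eq_le x y C : x = y -> Rabs y <= C -> Rabs x <= C.
Proof. intros ->. auto. Qed.

Lemma bound1 a C0 m N N1 N2 N3 k : 1 < a < 2 -> 0 <= C0 ->
  (1 <= N1)%Z -> (1 <= N2)%Z -> (1 <= N3)%Z ->
  INR (card_Sk a C0 m N N1 N2 N3 k) <= Cg a C0 * bnd' a (Z.min N2 N3) N1.
Proof.
  intros Ha HC H1 H2 H3. rewrite card_Sk_sum.
  apply Rle_trans with (sumL (zrange N1) (fun k1 => gL a C0 (Z.min N2 N3) (k1 - k)));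
    [|apply gsum; auto; lia].
  apply sumL_le; intros k1 _. rewrite sumL_swap.
  apply Rle_trans with (sumL (zrange N3) (fun k3 => indb (inS a C0 m N N1 N2 N3 k k1 (k1 + k3 - k) k3))).
  { apply sumL_le; intros k3 _.
    apply (sumL_collapse _ (fun u => inS a C0 m N N1 N2 N3 k k1 u k3)); [apply NoDup_zrange|].
    intros u Hu. apply inS_true in Hu. lia. }
  apply line_gL with (mu := m - P a k1 + P a k); auto; [lia|].
  intros x Hx. apply inS_true in Hx.
  destruct Hx as [E [D1 [D2 [V [B0 [B1 [B2 B3]]]]]]].
  split; [lia|]. split; [lia|].
  eapply Rabs_eq_le; [|apply V]. unfold Fa.
  rewrite (P_arg a (x + (k1 - k)) (k1 + x - k)) by lia.
  ring.
Qed.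

Lemma bound2 a C0 m N N1 N2 N3 k : 1 < a < 2 -> 0 <= C0 ->
  (1 <= N1)%Z -> (1 <= N2)%Z -> (1 <= N3)%Z ->
  INR (card_Sk a C0 m N N1 N2 N3 k) <= Cg a C0 * bnd' a (Z.min N1 N2) N3.
Proof.
  intros Ha HC H1 H2 H3. rewrite card_Sk_sum.
  apply Rle_trans with (sumL (zrange N1) (fun k1 => sumL (zrange N3) (fun k3 =>
     indb (inS a C0 m N N1 N2 N3 k k1 (k1 + k3 - k) k3)))).
  { apply sumL_le; intros k1 _. rewrite sumL_swap. apply sumL_le; intros k3 _.
    apply (sumL_collapse _ (fun u => inS a C0 m N N1 N2 N3 k k1 u k3)); [apply NoDup_zrange|].
    intros u Hu. apply inS_true in Hu. lia. }
  rewrite sumL_swap.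
  apply Rle_trans with (sumL (zrange N3) (fun k3 => gL a C0 (Z.min N1 N2) (k3 - k)));
    [|apply gsum; auto; lia].
  apply sumL_le; intros k3 _.
  apply line_gL with (q := fun k1 => inS a C0 m N N1 N2 N3 k k1 (k1 + k3 - k) k3)
    (mu := m - P a k3 + P a k); auto; [lia|].
  intros x Hx. apply inS_true in Hx.
  destruct Hx as [E [D1 [D2 [V [B0 [B1 [B2 B3]]]]]]].
  split; [lia|]. split; [lia|].
  eapply Rabs_eq_le; [|apply V]. unfold Fa.
  rewrite (P_arg a (x + (k3 - k)) (x + k3 - k)) by lia. ring.
Qed.

Lemma collapse_first (A B C : list Z) (f : Z -> Z -> Z -> bool) (h : Z -> Z -> Z) :
  NoDup A -> (forall k u v, f k u v = true -> k = h u v) ->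
  sumL A (fun k => sumL B (fun u => sumL C (fun v => indb (f k u v)))) <=
  sumL B (fun u => sumL C (fun v => indb (f (h u v) u v))).
Proof.
  intros HA Hf. rewrite sumL_swap. apply sumL_le; intros u _. rewrite sumL_swap.
  apply sumL_le; intros v _. apply (sumL_collapse A (fun k => f k u v)); auto.
Qed.

Lemma stage1 a C0 m N N1 N2 N3 k1 : (0 <= N)%Z ->
  INR (card_Sk1 a C0 m N N1 N2 N3 k1) <= sumL (zrange N2) (fun k2 => sumL (zrange N3) (fun k3 =>
    indb (inS a C0 m N N1 N2 N3 (k1 - k2 + k3) k1 k2 k3))).
Proof.
  intros HN. rewrite card_Sk1_sum.
  apply (collapse_first _ _ _ (fun k k2 k3 => inS a C0 m N N1 N2 N3 k k1 k2 k3)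
    (fun k2 k3 => (k1 - k2 + k3)%Z)); [apply NoDup_zrange|].
  intros k u v Hk. apply inS_true in Hk. lia.
Qed.

Lemma stage2 a C0 m N N1 N2 N3 k2 : (0 <= N)%Z ->
  INR (card_Sk2 a C0 m N N1 N2 N3 k2) <= sumL (zrange N1) (fun k1 => sumL (zrange N3) (fun k3 =>
    indb (inS a C0 m N N1 N2 N3 (k1 - k2 + k3) k1 k2 k3))).
Proof.
  intros HN. rewrite card_Sk2_sum.
  apply (collapse_first _ _ _ (fun k k1 k3 => inS a C0 m N N1 N2 N3 k k1 k2 k3)
    (fun k1 k3 => (k1 - k2 + k3)%Z)); [apply NoDup_zrange|].
  intros k u v Hk. apply inS_true in Hk. lia.
Qed.

Lemma stage3 a C0 m N N1 N2 N3 k3 : (0 <= N)%Z ->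
  INR (card_Sk3 a C0 m N N1 N2 N3 k3) <= sumL (zrange N1) (fun k1 => sumL (zrange N2) (fun k2 =>
    indb (inS a C0 m N N1 N2 N3 (k1 - k2 + k3) k1 k2 k3))).
Proof.
  intros HN. rewrite card_Sk3_sum.
  apply (collapse_first _ _ _ (fun k k1 k2 => inS a C0 m N N1 N2 N3 k k1 k2 k3)
    (fun k1 k2 => (k1 - k2 + k3)%Z)); [apply NoDup_zrange|].
  intros k u v Hk. apply inS_true in Hk. lia.
Qed.

Lemma bound3 a C0 m N N1 N2 N3 k1 : 1 < a < 2 -> 0 <= C0 ->
  (1 <= N2)%Z -> (1 <= N3)%Z -> (0 <= N)%Z ->
  INR (card_Sk1 a C0 m N N1 N2 N3 k1) <= Cg a C0 * bnd' a N3 N2.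
Proof.
  intros Ha HC H2 H3 HN. eapply Rle_trans; [apply stage1; auto|].
  apply Rle_trans with (sumL (zrange N2) (fun k2 => gL a C0 N3 (k2 - k1)));
    [|apply gsum; auto; lia].
  apply sumL_le; intros k2 _.
  replace (k2 - k1)%Z with (- (k1 - k2))%Z by lia. rewrite gL_opp.
  apply line_gL with (q := fun k3 => inS a C0 m N N1 N2 N3 (k1 - k2 + k3) k1 k2 k3)
    (mu := m - P a k1 + P a k2); auto; [lia|].
  intros x Hx. apply inS_true in Hx.
  destruct Hx as [E [D1 [D2 [V [B0 [B1 [B2 B3]]]]]]].
  split; [lia|]. split; [lia|].
  eapply Rabs_eq_le; [|apply V]. unfold Fa.
  rewrite (P_arg a (x + (k1 - k2)) (k1 - k2 + x)) by lia. ring.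
Qed.

Lemma bound5 a C0 m N N1 N2 N3 k2 : 1 < a < 2 -> 0 <= C0 ->
  (1 <= N1)%Z -> (1 <= N3)%Z -> (0 <= N)%Z ->
  INR (card_Sk2 a C0 m N N1 N2 N3 k2) <= Cg a C0 * bnd' a N3 N1.
Proof.
  intros Ha HC H1 H3 HN. eapply Rle_trans; [apply stage2; auto|].
  apply Rle_trans with (sumL (zrange N1) (fun k1 => gL a C0 N3 (k1 - k2)));
    [|apply gsum; auto; lia].
  apply sumL_le; intros k1 _.
  apply line_gL with (q := fun k3 => inS a C0 m N N1 N2 N3 (k1 - k2 + k3) k1 k2 k3)
    (mu := m - P a k1 + P a k2); auto; [lia|].
  intros x Hx. apply inS_true in Hx.
  destruct Hx as [E [D1 [D2 [V [B0 [B1 [B2 B3]]]]]]].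
  split; [lia|]. split; [lia|].
  eapply Rabs_eq_le; [|apply V]. unfold Fa.
  rewrite (P_arg a (x + (k1 - k2)) (k1 - k2 + x)) by lia. ring.
Qed.

Lemma bound6 a C0 m N N1 N2 N3 k2 : 1 < a < 2 -> 0 <= C0 ->
  (1 <= N1)%Z -> (1 <= N3)%Z -> (0 <= N)%Z ->
  INR (card_Sk2 a C0 m N N1 N2 N3 k2) <= Cg a C0 * bnd' a N1 N3.
Proof.
  intros Ha HC H1 H3 HN. eapply Rle_trans; [apply stage2; auto|].
  rewrite sumL_swap.
  apply Rle_trans with (sumL (zrange N3) (fun k3 => gL a C0 N1 (k3 - k2)));
    [|apply gsum; auto; lia].
  apply sumL_le; intros k3 _.
  apply line_gL with (q := fun k1 => inS a C0 m N N1 N2 N3 (k1 - k2 + k3) k1 k2 k3)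
    (mu := m + P a k2 - P a k3); auto; [lia|].
  intros x Hx. apply inS_true in Hx.
  destruct Hx as [E [D1 [D2 [V [B0 [B1 [B2 B3]]]]]]].
  split; [lia|]. split; [lia|].
  eapply Rabs_eq_le; [|apply V]. unfold Fa.
  rewrite (P_arg a (x + (k3 - k2)) (x - k2 + k3)) by lia. ring.
Qed.

Lemma bound7 a C0 m N N1 N2 N3 k3 : 1 < a < 2 -> 0 <= C0 ->
  (1 <= N1)%Z -> (1 <= N2)%Z -> (0 <= N)%Z ->
  INR (card_Sk3 a C0 m N N1 N2 N3 k3) <= Cg a C0 * bnd' a N1 N2.
Proof.
  intros Ha HC H1 H2 HN. eapply Rle_trans; [apply stage3; auto|].
  rewrite sumL_swap.
  apply Rle_trans with (sumL (zrange N2) (fun k2 => gL a C0 N1 (k2 - k3)));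
    [|apply gsum; auto; lia].
  apply sumL_le; intros k2 _.
  replace (k2 - k3)%Z with (- (k3 - k2))%Z by lia. rewrite gL_opp.
  apply line_gL with (q := fun k1 => inS a C0 m N N1 N2 N3 (k1 - k2 + k3) k1 k2 k3)
    (mu := m + P a k2 - P a k3); auto; [lia|].
  intros x Hx. apply inS_true in Hx.
  destruct Hx as [E [D1 [D2 [V [B0 [B1 [B2 B3]]]]]]].
  split; [lia|]. split; [lia|].
  eapply Rabs_eq_le; [|apply V]. unfold Fa.
  rewrite (P_arg a (x + (k3 - k2)) (x - k2 + k3)) by lia. ring.
Qed.

Lemma Rabs_le_inv (x b : R) : Rabs x <= b -> - b <= x <= b.
Proof. unfold Rabs. destruct (Rcase_abs x); lra. Qed.

Definition grow (a : R) (c x : Z) : R := P a x + P a (c - x).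
Definition Drow (a : R) (c x : Z) : R := G a x - G a (c - x - 1).

Lemma Drow_eq a c x : grow a c (x + 1) - grow a c x = Drow a c x.
Proof.
  unfold grow, Drow, G. rewrite (P_arg a (c - (x + 1)) (c - x - 1)) by lia.
  rewrite (P_arg a (c - x - 1 + 1) (c - x)) by lia. ring.
Qed.

Lemma Drow_mono a c x t : 1 < a < 2 -> (x <= t)%Z -> Drow a c x <= Drow a c t.
Proof.
  intros Ha Hxt. unfold Drow.
  pose proof (G_mono a t x Ha Hxt). pose proof (G_mono a (c - x - 1) (c - t - 1) Ha ltac:(lia)).
  lra.
Qed.

Lemma grow_up a c x (n : nat) eta :
  (forall t, (x <= t < x + Z.of_nat n)%Z -> eta <= Drow a c t) ->
  INR n * eta <= grow a c (x + Z.of_nat n) - grow a c x.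
Proof.
  induction n as [|n IH]; intros Ht.
  - replace (x + Z.of_nat 0)%Z with x by lia. simpl INR. lra.
  - rewrite S_INR. replace (x + Z.of_nat (S n))%Z with (x + Z.of_nat n + 1)%Z by lia.
    pose proof (Drow_eq a c (x + Z.of_nat n)).
    pose proof (Ht (x + Z.of_nat n)%Z ltac:(lia)).
    pose proof (IH (fun t H => Ht t ltac:(lia))). lra.
Qed.

Lemma grow_down a c x (n : nat) eta :
  (forall t, (x <= t < x + Z.of_nat n)%Z -> Drow a c t <= - eta) ->
  grow a c (x + Z.of_nat n) - grow a c x <= - (INR n * eta).
Proof.
  induction n as [|n IH]; intros Ht.
  - replace (x + Z.of_nat 0)%Z with x by lia. simpl INR. lra.
  - rewrite S_INR. replace (x + Z.of_nat (S n))%Z with (x + Z.of_nat n + 1)%Z by lia.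
    pose proof (Drow_eq a c (x + Z.of_nat n)).
    pose proof (Ht (x + Z.of_nat n)%Z ltac:(lia)).
    pose proof (IH (fun t H => Ht t ltac:(lia))). lra.
Qed.

Lemma steepR_close a c tau C0 eta x x' : 1 < a < 2 -> 0 < eta ->
  Rabs (grow a c x - tau) <= C0 -> Rabs (grow a c x' - tau) <= C0 ->
  eta <= Drow a c x -> eta <= Drow a c x' ->
  IZR (Z.abs (x - x')) <= 2 * C0 / eta.
Proof.
  intros Ha He Vx Vx' Sx Sx'.
  assert (Hd : forall u v, (u <= v)%Z -> Rabs (grow a c u - tau) <= C0 -> Rabs (grow a c v - tau) <= C0 ->
     eta <= Drow a c u -> IZR (v - u) * eta <= 2 * C0).
  { intros u v Huv Vu Vv Su.
    pose proof (grow_up a c u (Z.to_nat (v - u)) eta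
      (fun t Ht => Rle_trans _ _ _ Su (Drow_mono a c u t Ha ltac:(lia)))) as Hg.
    replace (u + Z.of_nat (Z.to_nat (v - u)))%Z with v in Hg by lia.
    rewrite INR_IZR_INZ, Z2Nat.id in Hg by lia.
    apply Rabs_le_inv in Vu. apply Rabs_le_inv in Vv. lra. }
  apply (Rmult_le_reg_r eta); auto. unfold Rdiv. rewrite Rmult_assoc, Rinv_l by lra.
  destruct (Z_le_gt_dec x x').
  - rewrite Z.abs_neq by lia. replace (- (x - x'))%Z with (x' - x)%Z by lia.
    pose proof (Hd x x' ltac:(lia) Vx Vx' Sx). lra.
  - rewrite Z.abs_eq by lia. pose proof (Hd x' x ltac:(lia) Vx' Vx Sx'). lra.
Qed.

Lemma steepL_close a c tau C0 eta x x' : 1 < a < 2 -> 0 < eta ->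
  Rabs (grow a c x - tau) <= C0 -> Rabs (grow a c x' - tau) <= C0 ->
  Drow a c x <= - eta -> Drow a c x' <= - eta ->
  IZR (Z.abs (x - x')) <= 2 * C0 / eta.
Proof.
  intros Ha He Vx Vx' Sx Sx'.
  assert (Hd : forall u v, (u <= v)%Z -> Rabs (grow a c u - tau) <= C0 -> Rabs (grow a c v - tau) <= C0 ->
     Drow a c v <= - eta -> IZR (v - u) * eta <= 2 * C0).
  { intros u v Huv Vu Vv Sv.
    destruct (Z.eq_dec u v) as [->|Hne].
    { replace (v - v)%Z with 0%Z by lia. rewrite Rmult_0_l. apply Rabs_le_inv in Vu. lra. }
    pose proof (grow_down a c u (Z.to_nat (v - u)) eta
      (fun t Ht => Rle_trans _ _ _ (Drow_mono a c t v Ha ltac:(lia)) Sv)) as Hg.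
    replace (u + Z.of_nat (Z.to_nat (v - u)))%Z with v in Hg by lia.
    rewrite INR_IZR_INZ, Z2Nat.id in Hg by lia.
    apply Rabs_le_inv in Vu. apply Rabs_le_inv in Vv. lra. }
  apply (Rmult_le_reg_r eta); auto. unfold Rdiv. rewrite Rmult_assoc, Rinv_l by lra.
  destruct (Z_le_gt_dec x x').
  - rewrite Z.abs_neq by lia. replace (- (x - x'))%Z with (x' - x)%Z by lia.
    pose proof (Hd x x' ltac:(lia) Vx Vx' Sx'). lra.
  - rewrite Z.abs_eq by lia. pose proof (Hd x' x ltac:(lia) Vx' Vx Sx). lra.
Qed.

Lemma half_bound a (x L : Z) : 1 < a < 2 -> L = (Z.abs x + 2)%Z ->
  / 2 <= IZR L * kap a (Z.abs x + L).
Proof.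
  intros Ha HL. unfold kap.
  assert (E : IZR (Z.abs x + L) + 2 = 2 * IZR L) by (rewrite plus_IZR, HL, plus_IZR; ring).
  rewrite E.
  assert (HLr : 2 <= IZR L) by (rewrite HL; apply IZR_le; lia).
  pose proof (Rpower_ge_inv (2 * IZR L) (a - 2) ltac:(lra) ltac:(lra)).
  apply Rle_trans with (IZR L * / (2 * IZR L)).
  - right. field. lra.
  - apply Rmult_le_compat_l; lra.
Qed.

Lemma flat_U a c x K : 1 < a < 2 -> (Z.abs x <= K)%Z ->
  - (c0 a / 2) < Drow a c x < c0 a / 2 ->
  IZR (Z.abs (2 * x + 1 - c)) <= Rpower (IZR (2 * K + 1) + 2) (2 - a).
Proof.
  intros Ha Hx [Hl Hr]. unfold Drow in *.
  set (u := x) in *. set (v := (c - x - 1)%Z) in *.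
  change (c - u - 1)%Z with v in Hl, Hr.
  assert (Hc := c0_pos a Ha).
  set (L := (Z.abs x + 2)%Z).
  pose proof (half_bound a x L Ha eq_refl) as Hh.
  assert (Hk := kap_pos a (Z.abs x + L)).
  assert (HLn : INR (Z.to_nat L) = IZR L) by (rewrite INR_IZR_INZ; f_equal; unfold L; lia).
  assert (S1 : (Z.abs (u - v) <= Z.abs x + 1)%Z).
  { destruct (Z_le_gt_dec (u + L) v) as [h1|h1].
    - exfalso.
      pose proof (G_incr a (Z.abs x + L) u (Z.to_nat L) Ha (fun t Ht => ltac:(unfold u, L in *; lia))) as Hg.
      replace (u + Z.of_nat (Z.to_nat L))%Z with (u + L)%Z in Hg by (unfold L; lia).
      pose proof (G_mono a v (u + L) Ha h1). rewrite HLn in Hg.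
      assert (c0 a / 2 <= IZR L * (c0 a * kap a (Z.abs x + L))).
      { replace (IZR L * (c0 a * kap a (Z.abs x + L))) with (c0 a * (IZR L * kap a (Z.abs x + L))) by ring.
        unfold Rdiv. apply Rmult_le_compat_l; lra. }
      lra.
    - destruct (Z_le_gt_dec v (u - L)) as [h2|h2]; [|lia].
      exfalso.
      pose proof (G_incr a (Z.abs x + L) (u - L) (Z.to_nat L) Ha (fun t Ht => ltac:(unfold u, L in *; lia))) as Hg.
      replace (u - L + Z.of_nat (Z.to_nat L))%Z with u in Hg by (unfold L; lia).
      pose proof (G_mono a (u - L) v Ha h2). rewrite HLn in Hg.
      assert (c0 a / 2 <= IZR L * (c0 a * kap a (Z.abs x + L))).
      { replace (IZR L * (c0 a * kap a (Z.abs x + L))) with (c0 a * (IZR L * kap a (Z.abs x + L))) by ring.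
        unfold Rdiv. apply Rmult_le_compat_l; lra. }
      lra. }
  set (K2 := (2 * K + 1)%Z).
  set (T := Rpower (IZR K2 + 2) (2 - a)).
  assert (HkT : kap a K2 * T = 1).
  { unfold kap, T. pose proof (Rpower_inv_mul (IZR K2 + 2) (a - 2)).
    replace (- (a - 2)) with (2 - a) in H by ring. auto. }
  assert (Hk2 := kap_pos a K2).
  assert (Hd : (2 * u + 1 - c = u - v)%Z) by (unfold u, v; lia).
  rewrite Hd.
  assert (HdT : forall d : Z, (0 <= d)%Z -> IZR d * (c0 a * kap a K2) < c0 a / 2 -> IZR d <= T).
  { intros d Hd0 Hlt.
    assert (IZR d * kap a K2 < / 2).
    { apply (Rmult_lt_reg_l (c0 a)); auto. replace (c0 a * / 2) with (c0 a / 2) by (unfold Rdiv; ring).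
      replace (c0 a * (IZR d * kap a K2)) with (IZR d * (c0 a * kap a K2)) by ring. auto. }
    assert (0 < T) by apply Rpower_pos.
    assert (IZR d = IZR d * kap a K2 * T) by (rewrite Rmult_assoc, HkT; ring).
    nra. }
  destruct (Z_le_gt_dec v u) as [h|h].
  - rewrite Z.abs_eq by lia. apply HdT; [lia|].
    pose proof (G_incr a K2 v (Z.to_nat (u - v)) Ha (fun t Ht => ltac:(unfold u, v, K2 in *; lia))) as Hg.
    replace (v + Z.of_nat (Z.to_nat (u - v)))%Z with u in Hg by lia.
    rewrite INR_IZR_INZ, Z2Nat.id in Hg by lia. lra.
  - rewrite Z.abs_neq by lia. apply HdT; [lia|].
    pose proof (G_incr a K2 u (Z.to_nat (v - u)) Ha (fun t Ht => ltac:(unfold u, v, K2 in *; lia))) as Hg.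
    replace (u + Z.of_nat (Z.to_nat (v - u)))%Z with v in Hg by lia.
    rewrite INR_IZR_INZ, Z2Nat.id in Hg by lia.
    replace (- (u - v))%Z with (v - u)%Z by lia. lra.
Qed.

Definition invZc (L b : Z) : R := if Z_le_dec (Z.abs b) L then invZ b else 0.

Lemma gL_bound_c (a C0 : R) (L b : Z) : 1 < a < 2 -> 0 <= C0 -> (1 <= L)%Z ->
  gL a C0 L b <= (8 * C0 / c0 a) * 3 * Rpower (IZR L) (2 - a) * invZc L b + (2 * (8 * C0 / c0 a) + 1).
Proof.
  intros Ha HC HL.
  assert (Hc := c0_pos a Ha).
  assert (HA : 0 <= 8 * C0 / c0 a) by (apply Rmult_le_pos; [lra|left; apply Rinv_0_lt_compat; auto]).
  unfold invZc. destruct (Z_le_dec (Z.abs b) L) as [h|h].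
  - pose proof (gL_bound a C0 L b Ha HC HL). lra.
  - unfold gL. destruct (Z.eq_dec b 0) as [_|Hb]; [lra|].
    assert (Hbr : 1 <= IZR (Z.abs b)) by (apply IZR_le; lia).
    assert (E1 : IZR (L + Z.abs b) + 2 <= 4 * IZR (Z.abs b)).
    { rewrite plus_IZR. assert (IZR L + 1 <= IZR (Z.abs b)) by (rewrite <- plus_IZR; apply IZR_le; lia).
      assert (1 <= IZR L) by (apply IZR_le; lia). lra. }
    assert (E2 : Rpower (IZR (L + Z.abs b) + 2) (2 - a) <= 4 * IZR (Z.abs b)).
    { eapply Rle_trans; [|apply E1]. apply Rpower_le_self; [|lra].
      rewrite plus_IZR. assert (0 <= IZR L) by (apply IZR_le; lia). lra. }
    rewrite Rmult_0_r, Rplus_0_l.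
    assert (2 * C0 * Rpower (IZR (L + Z.abs b) + 2) (2 - a) / (c0 a * IZR (Z.abs b)) <= 8 * C0 / c0 a).
    { unfold Rdiv. rewrite Rinv_mult.
      apply Rle_trans with (2 * C0 * (4 * IZR (Z.abs b)) * (/ c0 a * / IZR (Z.abs b))).
      - apply Rmult_le_compat_r.
        + apply Rmult_le_pos; left; apply Rinv_0_lt_compat; lra.
        + apply Rmult_le_compat_l; lra.
      - right. field. lra. }
    lra.
Qed.

Lemma sum_invZc (N2 Ny z : Z) : (1 <= Ny)%Z -> (0 <= N2)%Z ->
  sumL (zrange N2) (fun x => invZc Ny (z - x)) <= 2 * (1 + ln (IZR Ny)).
Proof.
  intros HNy HN2. rewrite <- (sumL_map (fun x => (z - x)%Z) (zrange N2) (invZc Ny)).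
  eapply Rle_trans; [|apply (invsum_range Ny HNy)].
  apply Rle_trans with (sumL (zrange Ny) (invZc Ny)).
  - apply sumL_incl2.
    + apply NoDup_map_NoDup_ForallPairs; [|apply NoDup_zrange]. intros x y _ _ E; lia.
    + intros b _. unfold invZc. destruct (Z_le_dec (Z.abs b) Ny); [right|left; auto].
      apply in_zrange; lia.
    + intros b _. unfold invZc. destruct (Z_le_dec (Z.abs b) Ny); [apply invZ_nonneg|lra].
    + intros b _. unfold invZc. destruct (Z_le_dec (Z.abs b) Ny); [apply invZ_nonneg|lra].
  - right. apply sumL_ext. intros b Hb. apply in_zrange in Hb; [|lia].
    unfold invZc. destruct (Z_le_dec (Z.abs b) Ny); [reflexivity|lia].
Qed.

Definition Ub (z Ny : Z) (T : R) (x : Z) : bool :=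
  if Rle_dec (IZR (z - Ny - 1) - T) (IZR (2 * x)) then
    if Rle_dec (IZR (2 * x)) (IZR (z + Ny - 1) + T) then true else false
  else false.

Lemma count_Ub (N2 z Ny : Z) (T : R) : 0 <= T -> (0 <= Ny)%Z ->
  sumL (zrange N2) (fun x => indb (Ub z Ny T x)) <= 2 * (IZR Ny + T) + 1.
Proof.
  intros HT HNy. rewrite <- length_filter_sum. apply diam_count.
  - apply NoDup_filter, NoDup_zrange.
  - assert (0 <= IZR Ny) by (apply IZR_le; lia). lra.
  - intros x x' Hx Hx'. apply filter_In in Hx. apply filter_In in Hx'.
    destruct Hx as [_ Hx]. destruct Hx' as [_ Hx'].
    unfold Ub in Hx, Hx'.
    destruct (Rle_dec _ (IZR (2 * x))); [|discriminate].
    destruct (Rle_dec (IZR (2 * x))); [|discriminate].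
    destruct (Rle_dec _ (IZR (2 * x'))); [|discriminate].
    destruct (Rle_dec (IZR (2 * x'))); [|discriminate].
    rewrite !mult_IZR, !minus_IZR, !plus_IZR in *.
    destruct (Z_le_gt_dec x x').
    + rewrite Z.abs_neq by lia. rewrite opp_IZR, minus_IZR. lra.
    + rewrite Z.abs_eq by lia. rewrite minus_IZR. lra.
Qed.

Lemma sum3 {A B} (l1 : list A) (l2 : list B) f g h :
  sumL l1 (fun x => sumL l2 (fun y => f x y + (g x y + h x y))) =
  sumL l1 (fun x => sumL l2 (f x)) + (sumL l1 (fun x => sumL l2 (g x)) + sumL l1 (fun x => sumL l2 (h x))).
Proof.
  rewrite <- !sumL_plus. apply sumL_ext. intros x _. rewrite !sumL_plus. reflexivity.
Qed.

Lemma band_row a C0 m z x y : Rabs (P a z - P a x + P a y - P a (z - x + y) - m) <= C0 ->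
  Rabs (grow a (z + y) x - (P a z + P a y - m)) <= C0.
Proof.
  intros V. unfold grow. rewrite (P_arg a (z + y - x) (z - x + y)) by lia.
  rewrite <- Rabs_Ropp. eapply Rabs_eq_le; [|apply V]. ring.
Qed.

Lemma row_steep_count a C0 m z y N2 eta (q : Z -> bool) (s : Z -> bool) : 1 < a < 2 -> 0 < eta -> 0 <= C0 ->
  (forall x, q x = true -> Rabs (P a z - P a x + P a y - P a (z - x + y) - m) <= C0) ->
  ((forall x, s x = true -> eta <= Drow a (z + y) x) \/ (forall x, s x = true -> Drow a (z + y) x <= - eta)) ->
  sumL (zrange N2) (fun x => indb (q x && s x)) <= 2 * (2 * C0 / eta) + 1.
Proof.
  intros Ha He HC Hq Hs. rewrite <- length_filter_sum. apply diam_count.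
  - apply NoDup_filter, NoDup_zrange.
  - apply Rmult_le_pos; [lra|left; apply Rinv_0_lt_compat; auto].
  - intros x x' Hx Hx'. apply filter_In in Hx. apply filter_In in Hx'.
    destruct Hx as [_ Hx]. destruct Hx' as [_ Hx'].
    apply andb_prop in Hx. apply andb_prop in Hx'.
    destruct Hx as [Qx Sx]. destruct Hx' as [Qx' Sx'].
    pose proof (band_row a C0 m z x y (Hq x Qx)).
    pose proof (band_row a C0 m z x' y (Hq x' Qx')).
    destruct Hs as [Hs|Hs].
    + apply (steepR_close a (z + y) (P a z + P a y - m) C0 eta); auto.
    + apply (steepL_close a (z + y) (P a z + P a y - m) C0 eta); auto.
Qed.

Definition sRb (a : R) (c x : Z) : bool := if Rle_dec (c0 a / 2) (Drow a c x) then true else false.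
Definition sLb (a : R) (c x : Z) : bool := if Rle_dec (Drow a c x) (- (c0 a / 2)) then true else false.
Definition Tb (a : R) (N2 : Z) : R := Rpower (IZR (2 * N2 + 1) + 2) (2 - a).

Lemma pointwise_split a C0 m z N2 Ny (q : Z -> Z -> bool) x y : 1 < a < 2 ->
  (forall x y, q x y = true -> x <> z /\ x <> y /\ (Z.abs x <= N2)%Z /\ (Z.abs y <= Ny)%Z /\
     Rabs (P a z - P a x + P a y - P a (z - x + y) - m) <= C0) ->
  indb (q x y) <= indb (q x y && Ub z Ny (Tb a N2) x) +
    (indb (q x y && sRb a (z + y) x) + indb (q x y && sLb a (z + y) x)).
Proof.
  intros Ha Hq.
  destruct (q x y) eqn:E; [|simpl andb; change (indb false) with 0; lra].
  simpl andb.
  pose proof (ind_nonneg (Ub z Ny (Tb a N2) x)).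
  pose proof (ind_nonneg (sRb a (z + y) x)).
  pose proof (ind_nonneg (sLb a (z + y) x)).
  destruct (sRb a (z + y) x) eqn:ER; [change (indb true) with 1 in *; lra|].
  destruct (sLb a (z + y) x) eqn:EL; [change (indb true) with 1 in *; lra|].
  destruct (Hq x y E) as [_ [_ [Bx [By _]]]].
  unfold sRb, sLb in ER, EL.
  destruct (Rle_dec (c0 a / 2) (Drow a (z + y) x)) as [|n1]; [discriminate|].
  destruct (Rle_dec (Drow a (z + y) x) (- (c0 a / 2))) as [|n2]; [discriminate|].
  apply Rnot_le_lt in n1. apply Rnot_le_lt in n2.
  pose proof (flat_U a (z + y) x N2 Ha Bx ltac:(lra)) as F.
  fold (Tb a N2) in F.
  assert (Ht : Ub z Ny (Tb a N2) x = true).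
  { set (d := (2 * x + 1 - (z + y))%Z) in *.
    assert (IZR d <= IZR (Z.abs d) /\ - IZR d <= IZR (Z.abs d)).
    { split; [apply IZR_le; lia|rewrite <- opp_IZR; apply IZR_le; lia]. }
    assert (E2 : IZR (2 * x) = IZR d - 1 + IZR z + IZR y) by (unfold d; rewrite !minus_IZR, !plus_IZR; ring).
    assert (IZR y <= IZR Ny /\ - IZR Ny <= IZR y).
    { split; [apply IZR_le; lia|rewrite <- opp_IZR; apply IZR_le; lia]. }
    unfold Ub. rewrite E2, !minus_IZR, !plus_IZR.
    destruct (Rle_dec _ _); [|lra]. destruct (Rle_dec _ _); [reflexivity|lra]. }
  rewrite Ht. change (indb true) with 1. lra.
Qed.

Definition Cb (a C0 : R) : R := 50 * (8 * C0 / c0 a) + 20.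

Lemma badsum a C0 m z N2 Ny (q : Z -> Z -> bool) : 1 < a < 2 -> 0 <= C0 ->
  (1 <= N2)%Z -> (1 <= Ny)%Z -> (Ny <= N2)%Z ->
  (forall x y, q x y = true -> x <> z /\ x <> y /\ (Z.abs x <= N2)%Z /\ (Z.abs y <= Ny)%Z /\
     Rabs (P a z - P a x + P a y - P a (z - x + y) - m) <= C0) ->
  sumL (zrange N2) (fun x => sumL (zrange Ny) (fun y => indb (q x y))) <= Cb a C0 * bnd' a N2 Ny.
Proof.
  intros Ha HC H2 Hy Hle Hq.
  assert (Hc := c0_pos a Ha).
  set (A := 8 * C0 / c0 a).
  assert (HA : 0 <= A) by (apply Rmult_le_pos; [lra|left; apply Rinv_0_lt_compat; auto]).
  set (T := Tb a N2).
  set (Y := Rpower (IZR Ny) (2 - a)).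
  eapply Rle_trans.
  { apply sumL_le; intros x _; apply sumL_le; intros y _.
    apply (pointwise_split a C0 m z N2 Ny q x y Ha Hq). }
  rewrite sum3.
  assert (PU : sumL (zrange N2) (fun x => sumL (zrange Ny) (fun y => indb (q x y && Ub z Ny T x)))
     <= A * 3 * Y * (2 * (1 + ln (IZR Ny))) + (2 * A + 1) * (2 * (IZR Ny + T) + 1)).
  { apply Rle_trans with (sumL (zrange N2) (fun x => A * 3 * Y * invZc Ny (z - x) + (2 * A + 1) * indb (Ub z Ny T x))).
    - apply sumL_le; intros x _.
      assert (Hinv := invZ_nonneg (z - x)).
      assert (Hc2 : 0 <= invZc Ny (z - x)) by (unfold invZc; destruct (Z_le_dec _ _); lra).
      assert (HY : 0 < Y) by apply Rpower_pos.
      destruct (Ub z Ny T x) eqn:EU.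
      + apply Rle_trans with (gL a C0 Ny (z - x)).
        * apply (line_gL a C0 Ny Ny (z - x) (m - P a z + P a x) (fun y => andb (q x y) true)); auto; [lia|].
          intros y Hqy. rewrite Bool.andb_true_r in Hqy.
          destruct (Hq x y Hqy) as [D1 [D2 [B1 [B2 V]]]].
          split; [lia|]. split; [lia|].
          eapply Rabs_eq_le; [|apply V]. unfold Fa.
          rewrite (P_arg a (y + (z - x)) (z - x + y)) by lia. ring.
        * pose proof (gL_bound_c a C0 Ny (z - x) Ha HC Hy) as HB. fold A Y in HB. change (indb true) with 1. lra.
      + apply Rle_trans with 0.
        * right. apply Rle_antisym.
          -- apply Rle_trans with (sumL (zrange Ny) (fun _ => 0)).
             ++ apply sumL_le. intros y _. rewrite Bool.andb_false_r. change (indb false) with 0. lra.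
             ++ rewrite sumL_const. lra.
          -- apply sumL_nonneg. intros; apply ind_nonneg.
        * change (indb false) with 0. assert (0 <= A * 3) by lra.
          assert (0 <= A * 3 * Y) by (apply Rmult_le_pos; lra).
          assert (0 <= A * 3 * Y * invZc Ny (z - x)) by (apply Rmult_le_pos; lra). lra.
    - rewrite sumL_plus, sumL_scal, sumL_scal.
      pose proof (sum_invZc N2 Ny z Hy ltac:(lia)).
      assert (HT : 0 <= T) by (left; apply Rpower_pos).
      pose proof (count_Ub N2 z Ny T HT ltac:(lia)).
      assert (0 <= A * 3 * Y) by (assert (0 < Y) by apply Rpower_pos; nra).
      apply Rplus_le_compat; apply Rmult_le_compat_l; auto; lra. }
  set (eta := c0 a / 2).
  assert (Heta : 0 < eta) by (unfold eta; lra).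
  assert (PR : sumL (zrange N2) (fun x => sumL (zrange Ny) (fun y => indb (q x y && sRb a (z + y) x)))
     <= (2 * (2 * C0 / eta) + 1) * (2 * IZR Ny + 1)).
  { rewrite sumL_swap.
    replace ((2 * (2 * C0 / eta) + 1) * (2 * IZR Ny + 1)) with (sumL (zrange Ny) (fun _ => 2 * (2 * C0 / eta) + 1))
      by (rewrite sumL_const, length_zrange by lia; ring).
    apply sumL_le; intros y _.
    apply (row_steep_count a C0 m z y N2 eta (fun x => q x y) (fun x => sRb a (z + y) x)); auto.
    - intros x Hx. destruct (Hq x y Hx) as [_ [_ [_ [_ V]]]]. auto.
    - left. intros x Hx. unfold sRb in Hx. destruct (Rle_dec _ _); [auto|discriminate]. }
  assert (PL : sumL (zrange N2) (fun x => sumL (zrange Ny) (fun y => indb (q x y && sLb a (z + y) x)))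
     <= (2 * (2 * C0 / eta) + 1) * (2 * IZR Ny + 1)).
  { rewrite sumL_swap.
    replace ((2 * (2 * C0 / eta) + 1) * (2 * IZR Ny + 1)) with (sumL (zrange Ny) (fun _ => 2 * (2 * C0 / eta) + 1))
      by (rewrite sumL_const, length_zrange by lia; ring).
    apply sumL_le; intros y _.
    apply (row_steep_count a C0 m z y N2 eta (fun x => q x y) (fun x => sLb a (z + y) x)); auto.
    - intros x Hx. destruct (Hq x y Hx) as [_ [_ [_ [_ V]]]]. auto.
    - right. intros x Hx. unfold sLb in Hx. destruct (Rle_dec _ _); [auto|discriminate]. }
  assert (E4 : 2 * C0 / eta = A / 2) by (unfold eta, A; field; lra).
  rewrite E4 in PR, PL.
  assert (HNy : 1 <= IZR Ny) by (apply IZR_le; lia).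
  assert (HN2 : IZR Ny <= IZR N2) by (apply IZR_le; lia).
  set (Z2 := Rpower (IZR N2) (2 - a)).
  assert (HYZ : Y <= Z2) by (apply Rle_Rpower_l; lra).
  assert (HZ1 : 1 <= Z2) by (apply Rpower_ge1; lra).
  assert (HT5 : T <= 5 * Z2).
  { unfold T, Tb, Z2. apply Rle_trans with (Rpower (5 * IZR N2) (2 - a)).
    - apply Rle_Rpower_l; [lra|]. rewrite plus_IZR, mult_IZR. lra.
    - rewrite <- Rpower_mult_distr by lra.
      assert (Rpower 5 (2 - a) <= 5) by (apply Rpower_le_self; lra).
      assert (0 < Rpower (IZR N2) (2 - a)) by apply Rpower_pos. nra. }
  set (l := ln (2 + IZR Ny)).
  assert (Hl1 : 1 <= l) by (apply ln2N_ge1; lia).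
  assert (Hln : ln (IZR Ny) <= l) by (apply ln_le'; lra).
  assert (HY0 : 0 < Y) by apply Rpower_pos.
  unfold bnd', Cb. fold Z2. fold l. fold A.
  assert (X1 : A * 3 * Y * (2 * (1 + ln (IZR Ny))) <= 12 * A * Z2 * l).
  { assert (0 <= 1 + ln (IZR Ny)) by (pose proof (ln_le' 1 (IZR Ny) ltac:(lra) HNy); rewrite ln_1 in *; lra).
    apply Rle_trans with (A * 3 * Z2 * (2 * (2 * l))).
    - apply Rmult_le_compat; try nra.
    - nra. }
  assert (X2 : (2 * A + 1) * (2 * (IZR Ny + T) + 1) <= (2 * A + 1) * (3 * IZR Ny + 10 * Z2 * l)).
  { apply Rmult_le_compat_l; nra. }
  assert (A <= A * IZR Ny) by nra.
  change (Tb a N2) with T.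
  assert (0 <= Z2 * l) by nra. assert (0 <= A * Z2 * l) by (apply Rmult_le_pos; nra).
  lra.
Qed.

Lemma swap_bnd a (N2 Ny : Z) : 1 < a < 2 -> (1 <= N2)%Z -> (N2 <= Ny)%Z ->
  bnd' a Ny N2 <= (3 / (a - 1) + 1) * bnd' a N2 Ny.
Proof.
  intros Ha H2 Hle.
  assert (HN2 : 1 <= IZR N2) by (apply IZR_le; lia).
  assert (HNy : IZR N2 <= IZR Ny) by (apply IZR_le; lia).
  set (y := IZR Ny) in *.
  assert (Hl : ln (2 + IZR N2) <= ln (2 + y)) by (apply ln_le'; lra).
  assert (Hl3 : ln (2 + y) <= ln (3 * y)) by (apply ln_le'; lra).
  set (g := a - 1).
  assert (Hg : 0 < g) by (unfold g; lra).
  pose proof (ln_le_pow (3 * y) g ltac:(lra) Hg) as Hp.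
  rewrite <- Rpower_mult_distr in Hp by lra.
  assert (Rpower 3 g <= 3) by (apply Rpower_le_self; unfold g; lra).
  assert (Hyg : 0 < Rpower y g) by apply Rpower_pos.
  assert (Hlog : ln (2 + y) <= 3 / g * Rpower y g).
  { apply (Rmult_le_reg_l g); auto. replace (g * (3 / g * Rpower y g)) with (3 * Rpower y g) by (field; lra).
    nra. }
  assert (Hb : 0 < Rpower y (2 - a)) by apply Rpower_pos.
  assert (Hprod : Rpower y (2 - a) * Rpower y g = y).
  { rewrite <- Rpower_plus. replace (2 - a + g) with 1 by (unfold g; ring). apply Rpower_1. lra. }
  assert (HB : Rpower y (2 - a) * ln (2 + IZR N2) <= 3 / g * y).
  { apply Rle_trans with (Rpower y (2 - a) * (3 / g * Rpower y g)).
    - apply Rmult_le_compat_l; lra.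
    - replace (Rpower y (2 - a) * (3 / g * Rpower y g)) with (3 / g * (Rpower y (2 - a) * Rpower y g)) by ring. rewrite Hprod. lra. }
  unfold bnd'. fold y.
  assert (0 <= Rpower (IZR N2) (2 - a) * ln (2 + y)).
  { apply Rmult_le_pos; [left; apply Rpower_pos|]. pose proof (ln2N_ge1 Ny ltac:(lia)) as Hl2. fold y in Hl2. lra. }
  assert (0 < 3 / g) by (apply Rmult_lt_0_compat; [lra|apply Rinv_0_lt_compat; auto]).
  assert (3 / g * y <= 3 / g * (Rpower (IZR N2) (2 - a) * ln (2 + y) + y)) by (apply Rmult_le_compat_l; lra).
  lra.
Qed.

Lemma bound4 a C0 m N N1 N2 N3 k1 : 1 < a < 2 -> 0 <= C0 ->
  (1 <= N2)%Z -> (1 <= N3)%Z -> (0 <= N)%Z ->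
  INR (card_Sk1 a C0 m N N1 N2 N3 k1) <=
    Rmax (Cb a C0) (Cg a C0 * (3 / (a - 1) + 1)) * bnd' a N2 N3.
Proof.
  intros Ha HC H2 H3 HN.
  assert (Hbnd : 0 <= bnd' a N2 N3).
  { unfold bnd'. pose proof (ln2N_ge1 N3 H3). assert (1 <= IZR N3) by (apply IZR_le; lia).
    pose proof (Rpower_pos (IZR N2) (2 - a)). nra. }
  destruct (Z_le_gt_dec N3 N2) as [h|h].
  - eapply Rle_trans; [apply stage1; auto|].
    eapply Rle_trans.
    + apply (badsum a C0 m k1 N2 N3 (fun x y => inS a C0 m N N1 N2 N3 (k1 - x + y) k1 x y)); auto.
      intros x y Hxy. apply inS_true in Hxy.
      destruct Hxy as [E [D1 [D2 [V [B0 [B1 [B2 B3]]]]]]]. repeat split; auto.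
    + apply Rmult_le_compat_r; auto. apply Rmax_l.
  - eapply Rle_trans; [apply bound3; auto|].
    pose proof (swap_bnd a N2 N3 Ha H2 ltac:(lia)).
    assert (Hc := c0_pos a Ha).
    assert (0 <= Cg a C0).
    { unfold Cg. assert (0 <= 8 * C0 / c0 a) by (apply Rmult_le_pos; [lra|left; apply Rinv_0_lt_compat; auto]). lra. }
    apply Rle_trans with (Cg a C0 * ((3 / (a - 1) + 1) * bnd' a N2 N3)).
    + apply Rmult_le_compat_l; auto.
    + rewrite <- Rmult_assoc. apply Rmult_le_compat_r; auto. apply Rmax_r.
Qed.

Lemma bound8 a C0 m N N1 N2 N3 k3 : 1 < a < 2 -> 0 <= C0 ->
  (1 <= N1)%Z -> (1 <= N2)%Z -> (0 <= N)%Z ->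
  INR (card_Sk3 a C0 m N N1 N2 N3 k3) <=
    Rmax (Cb a C0) (Cg a C0 * (3 / (a - 1) + 1)) * bnd' a N2 N1.
Proof.
  intros Ha HC H1 H2 HN.
  assert (Hbnd : 0 <= bnd' a N2 N1).
  { unfold bnd'. pose proof (ln2N_ge1 N1 H1). assert (1 <= IZR N1) by (apply IZR_le; lia).
    pose proof (Rpower_pos (IZR N2) (2 - a)). nra. }
  destruct (Z_le_gt_dec N1 N2) as [h|h].
  - eapply Rle_trans; [apply stage3; auto|]. rewrite sumL_swap.
    eapply Rle_trans.
    + apply (badsum a C0 m k3 N2 N1 (fun x y => inS a C0 m N N1 N2 N3 (y - x + k3) y x k3)); auto.
      intros x y Hxy. apply inS_true in Hxy.
      destruct Hxy as [E [D1 [D2 [V [B0 [B1 [B2 B3]]]]]]]. repeat split; auto.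
      eapply Rabs_eq_le; [|apply V].
      rewrite (P_arg a (k3 - x + y) (y - x + k3)) by lia. ring.
    + apply Rmult_le_compat_r; auto. apply Rmax_l.
  - eapply Rle_trans; [apply bound7; auto|].
    pose proof (swap_bnd a N2 N1 Ha H2 ltac:(lia)).
    assert (Hc := c0_pos a Ha).
    assert (0 <= Cg a C0).
    { unfold Cg. assert (0 <= 8 * C0 / c0 a) by (apply Rmult_le_pos; [lra|left; apply Rinv_0_lt_compat; auto]). lra. }
    apply Rle_trans with (Cg a C0 * ((3 / (a - 1) + 1) * bnd' a N2 N1)).
    + apply Rmult_le_compat_l; auto.
    + rewrite <- Rmult_assoc. apply Rmult_le_compat_r; auto. apply Rmax_r.
Qed.

Lemma dyad_ge1 n : (1 <= dyad n)%Z.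
Proof. unfold dyad. pose proof (Z.pow_pos_nonneg 2 (Z.of_nat n) ltac:(lia) ltac:(lia)). lia. Qed.

Lemma bnd_nonneg a L M : (1 <= L)%Z -> (1 <= M)%Z -> 0 <= bnd' a L M.
Proof.
  intros HL HM. unfold bnd'. pose proof (ln2N_ge1 M HM). assert (1 <= IZR M) by (apply IZR_le; lia).
  pose proof (Rpower_pos (IZR L) (2 - a)). nra.
Qed.

Theorem corollary2p6 (alpha C0 : R) :
  1 < alpha < 2 -> 0 < C0 ->
  exists C : R, 0 < C /\
  forall (n n1 n2 n3 : nat) (m : R),
    let N := dyad n in let N1 := dyad n1 in let N2 := dyad n2 in
    let N3 := dyad n3 in
    (N1 <= N)%Z -> (N2 <= N)%Z -> (N3 <= N)%Z ->
    (forall k : Z, INR (card_Sk alpha C0 m N N1 N2 N3 k) <=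
       C * Rmin (bnd alpha (Z.min N2 N3) N1) (bnd alpha (Z.min N1 N2) N3)) /\
    (forall k1 : Z, INR (card_Sk1 alpha C0 m N N1 N2 N3 k1) <=
       C * Rmin (bnd alpha N3 N2) (bnd alpha N2 N3)) /\
    (forall k2 : Z, INR (card_Sk2 alpha C0 m N N1 N2 N3 k2) <=
       C * Rmin (bnd alpha N3 N1) (bnd alpha N1 N3)) /\
    (forall k3 : Z, INR (card_Sk3 alpha C0 m N N1 N2 N3 k3) <=
       C * Rmin (bnd alpha N1 N2) (bnd alpha N2 N1)).
Proof.
  intros Ha HC.
  assert (Hc := c0_pos alpha Ha).
  assert (HA : 0 <= 8 * C0 / c0 alpha) by (apply Rmult_le_pos; [lra|left; apply Rinv_0_lt_compat; auto]).
  assert (HCg : 3 <= Cg alpha C0) by (unfold Cg; lra).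
  set (Cm := Rmax (Cb alpha C0) (Cg alpha C0 * (3 / (alpha - 1) + 1))).
  assert (HCm : 0 <= Cm).
  { unfold Cm. eapply Rle_trans; [|apply Rmax_l]. unfold Cb. lra. }
  exists (Cm + Cg alpha C0). split; [lra|].
  intros n n1 n2 n3 m N N1 N2 N3 HN1 HN2 HN3.
  assert (P1 := dyad_ge1 n1). assert (P2 := dyad_ge1 n2). assert (P3 := dyad_ge1 n3).
  assert (P0 := dyad_ge1 n).
  fold N N1 N2 N3 in P0, P1, P2, P3.
  assert (Hgood : forall X L M, (1 <= L)%Z -> (1 <= M)%Z -> X <= Cg alpha C0 * bnd' alpha L M ->
            X <= (Cm + Cg alpha C0) * bnd' alpha L M).
  { intros X L M HL HM HX. pose proof (bnd_nonneg alpha L M HL HM).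
    eapply Rle_trans; [apply HX|]. apply Rmult_le_compat_r; lra. }
  assert (Hbad : forall X L M, (1 <= L)%Z -> (1 <= M)%Z -> X <= Cm * bnd' alpha L M ->
            X <= (Cm + Cg alpha C0) * bnd' alpha L M).
  { intros X L M HL HM HX. pose proof (bnd_nonneg alpha L M HL HM).
    eapply Rle_trans; [apply HX|]. apply Rmult_le_compat_r; lra. }
  assert (HC' : 0 <= C0) by lra.
  repeat split.
  - intros k. apply (Rmin_case (bnd alpha (Z.min N2 N3) N1) (bnd alpha (Z.min N1 N2) N3)
      (fun t => INR (card_Sk alpha C0 m N N1 N2 N3 k) <= (Cm + Cg alpha C0) * t)).
    + apply Hgood; [lia|lia|]. apply bound1; auto.
    + apply Hgood; [lia|lia|]. apply bound2; auto.
  - intros k1. apply (Rmin_case (bnd alpha N3 N2) (bnd alpha N2 N3)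
      (fun t => INR (card_Sk1 alpha C0 m N N1 N2 N3 k1) <= (Cm + Cg alpha C0) * t)).
    + apply Hgood; [lia|lia|]. apply bound3; auto; lia.
    + apply Hbad; [lia|lia|]. apply bound4; auto; lia.
  - intros k2. apply (Rmin_case (bnd alpha N3 N1) (bnd alpha N1 N3)
      (fun t => INR (card_Sk2 alpha C0 m N N1 N2 N3 k2) <= (Cm + Cg alpha C0) * t)).
    + apply Hgood; [lia|lia|]. apply bound5; auto; lia.
    + apply Hgood; [lia|lia|]. apply bound6; auto; lia.
  - intros k3. apply (Rmin_case (bnd alpha N1 N2) (bnd alpha N2 N1)
      (fun t => INR (card_Sk3 alpha C0 m N N1 N2 N3 k3) <= (Cm + Cg alpha C0) * t)).
    + apply Hgood; [lia|lia|]. apply bound7; auto; lia.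
    + apply Hbad; [lia|lia|]. apply bound8; auto; lia.
Qed.
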